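(* Let $h>0$ and $\alpha>2$, and let $\mathrm{P}_{\mathrm{cov}}^{(\mathrm{C})}(\theta,\lambda)$ and $\mathrm{P}_{\mathrm{cov}}^{(\mathrm{S})}(\theta,\lambda)$ be the coverage probabilities for closest-BS association ($\theta>0$) and strongest-BS association ($\theta\ge1$) with BS density $\lambda$ and BS height $h$, given by $$\mathrm{P}_{\mathrm{cov}}^{(\mathrm{C})}(\theta,\lambda)=\frac{1}{\psi(\theta)+1}e^{-\pi\lambda h^2\psi(\theta)},\qquad \mathrm{P}_{\mathrm{cov}}^{(\mathrm{S})}(\theta,\lambda)=2\pi\lambda\int_h^\infty e^{-\pi\lambda h^2\psi(\theta h^{-\alpha}r^\alpha)}\,r\,dr.$$ Then: (i) $\lim_{\lambda\to0}\mathrm{P}_{\mathrm{cov}}^{(\mathrm{C})}(\theta,\lambda)=\frac{1}{\psi(\theta)+1}$; (ii) $\lim_{\lambda\to0}\mathrm{P}_{\mathrm{cov}}^{(\mathrm{S})}(\theta,\lambda)=\frac{\alpha\sin(2\pi/\alpha)}{2\pi\theta^{2/\alpha}}$; (iii) $\lim_{\lambda\to\infty}\mathrm{P}_{\mathrm{cov}}^{(\mathrm{C})}(\theta,\lambda)=\lim_{\lambda\to\infty}\mathrm{P}_{\mathrm{cov}}^{(\mathrm{S})}(\theta,\lambda)=0$.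
   Context: $\psi(z)=\frac{2z}{\alpha-2}\,{}_2F_1\big(1,1-\tfrac{2}{\alpha};2-\tfrac{2}{\alpha};-z\big)$ for $z>0$, with ${}_2F_1$ the Gauss hypergeometric function. Model: a typical user at the origin of $\mathbb{R}^2$ at ground level; BSs form a homogeneous Poisson point process of intensity $\lambda$, all at height $h$; i.i.d. unit-mean exponential fading; pathloss $(r^2+h^2)^{-\alpha/2}$ with $r$ the horizontal distance; noise neglected. Closest-BS association: served by the horizontally nearest BS, coverage $=\Pr[\mathrm{SIR}>\theta]$; strongest-BS association: coverage $=\Pr[\max_x\mathrm{SIR}_x>\theta]$. The values in (i) and (ii) are the coverage probabilities of the corresponding models with $h=0$. *)

(* Defs.v *)
From Stdlib Require Import Reals Lra ClassicalEpsilon.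
Open Scope R_scope.

(* real power x^y for x > 0, set to 0 for x <= 0 (only used with y > 0
   at x = 0, where this is the correct value) *)
Definition rpow (x y : R) : R := if Rlt_dec 0 x then Rpower x y else 0.

Definition Rint (f : R -> R) (a b : R) : R :=
  epsilon (inhabits 0)
    (fun l => exists pr : Riemann_integrable f a b, RiemannInt pr = l).

Definition Rint_inf (f : R -> R) (a : R) : R :=
  epsilon (inhabits 0)
    (fun l => forall eps, 0 < eps -> exists M, forall T, M < T ->
       Rabs (Rint f a T - l) < eps).

(* Gauss hypergeometric 2F1(1, b; b+1; -z) with b = 1 - 2/alpha, via Euler's
   integral  b * int_0^1 t^(b-1)/(1+z t) dt, after substituting t = s^(1/b):
   int_0^1 ds / (1 + z s^(alpha/(alpha-2))).  Valid (analytic continuation)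
   for all z > -1. *)
Definition hyp2F1 (alpha z : R) : R :=
  Rint (fun s => / (1 + z * rpow s (alpha / (alpha - 2)))) 0 1.

Definition psi (alpha z : R) : R :=
  2 * z / (alpha - 2) * hyp2F1 alpha z.

Definition Pcov_C (alpha h theta lambda : R) : R :=
  / (psi alpha theta + 1) * exp (- PI * lambda * h ^ 2 * psi alpha theta).

Definition Pcov_S (alpha h theta lambda : R) : R :=
  2 * PI * lambda *
  Rint_inf (fun r => exp (- PI * lambda * h ^ 2 *
                 psi alpha (theta * rpow h (- alpha) * rpow r alpha)) * r) h.

(* Main.v *)
Require Import Defs.
From Stdlib Require Import Reals Lra Lia ZArith ClassicalEpsilon.
From Coquelicot Require Import Coquelicot.
Open Scope R_scope.

Lemma rpow_pos x y : 0 < x -> rpow x y = Rpower x y.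
Proof. intros H; unfold rpow; destruct (Rlt_dec 0 x); [auto|lra]. Qed.

Lemma rpow_nonpos x y : x <= 0 -> rpow x y = 0.
Proof. intros H; unfold rpow; destruct (Rlt_dec 0 x); [lra|auto]. Qed.

Lemma rpow_ge0 x y : 0 <= rpow x y.
Proof. unfold rpow; destruct (Rlt_dec 0 x); [unfold Rpower; left; apply exp_pos|lra]. Qed.

Lemma Rpower_small q : 0 < q -> forall eps, 0 < eps -> exists d, 0 < d /\
  forall x, 0 < x < d -> Rpower x q < eps.
Proof.
  intros Hq eps He. exists (exp (ln eps / q)). split. apply exp_pos.
  intros x [H1 H2]. unfold Rpower.
  rewrite <- (exp_ln eps He). apply exp_increasing.
  assert (ln x < ln eps / q).
  { rewrite <- (ln_exp (ln eps / q)). apply ln_increasing; auto. }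
  apply Rmult_lt_compat_l with (r := q) in H; auto.
  replace (q * (ln eps / q)) with (ln eps) in H by (field; lra). lra.
Qed.

Lemma rpow_cont q x : 0 < q -> continuous (fun u => rpow u q) x.
Proof.
  intros Hq.
  destruct (Rlt_le_dec 0 x) as [Hx|Hx].
  - apply continuous_ext_loc with (fun u => exp (q * ln u)).
    + exists (mkposreal x Hx). intros y Hy. 
      unfold ball in Hy; simpl in Hy; unfold AbsRing_ball, abs, minus, plus, opp in Hy; simpl in Hy.
      rewrite rpow_pos; [reflexivity|]. apply Rabs_lt_between in Hy; lra.
    + apply (ex_derive_continuous (fun u => exp (q * ln u))). auto_derive. auto.
  - destruct Hx as [Hx|Hx].
    + apply continuous_ext_loc with (fun _ => 0).
      * exists (mkposreal (-x) ltac:(lra)). intros y Hy.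
        unfold ball in Hy; simpl in Hy; unfold AbsRing_ball, abs, minus, plus, opp in Hy; simpl in Hy.
        rewrite rpow_nonpos; [reflexivity|]. apply Rabs_lt_between in Hy; lra.
      * apply continuous_const.
    + subst x. apply (proj1 (continuity_pt_filterlim _ _)).
      intros eps He. destruct (Rpower_small q Hq eps He) as [d [Hd Hd']].
      exists d. split; auto. intros y [_ Hy]. simpl in Hy.
      unfold R_dist in *; simpl. rewrite (rpow_nonpos 0) by lra.
      destruct (Rlt_le_dec 0 y).
      * rewrite rpow_pos by auto. unfold Rdist. rewrite Rminus_0_r, Rabs_pos_eq.
        apply Hd'. rewrite Rminus_0_r, Rabs_pos_eq in Hy; lra.
        unfold Rpower; left; apply exp_pos.
      * rewrite rpow_nonpos by auto. unfold Rdist. rewrite Rminus_0_r, Rabs_R0. lra.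
Qed.

Lemma rpow_derive q x : 1 < q -> is_derive (fun u => rpow u q) x (q * rpow x (q - 1)).
Proof.
  intros Hq.
  destruct (Rlt_le_dec 0 x) as [Hx|Hx].
  - apply is_derive_ext_loc with (fun u => exp (q * ln u)).
    + exists (mkposreal x Hx). intros y Hy.
      unfold ball in Hy; simpl in Hy; unfold AbsRing_ball, abs, minus, plus, opp in Hy; simpl in Hy.
      rewrite rpow_pos; [reflexivity|]. apply Rabs_lt_between in Hy; lra.
    + rewrite rpow_pos by auto. auto_derive. auto.
      unfold Rpower. replace (q * ln x) with ((q - 1) * ln x + ln x) by ring.
      rewrite exp_plus, exp_ln by auto. field. lra.
  - destruct Hx as [Hx|Hx].
    + rewrite (rpow_nonpos x) by lra. rewrite Rmult_0_r.
      apply is_derive_ext_loc with (fun _ => 0).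
      * exists (mkposreal (-x) ltac:(lra)). intros y Hy.
        unfold ball in Hy; simpl in Hy; unfold AbsRing_ball, abs, minus, plus, opp in Hy; simpl in Hy.
        rewrite rpow_nonpos; [reflexivity|]. apply Rabs_lt_between in Hy; lra.
      * auto_derive; auto.
    + subst x. rewrite (rpow_nonpos 0) by lra. rewrite Rmult_0_r.
      apply is_derive_Reals. intros eps He.
      destruct (Rpower_small (q-1) ltac:(lra) eps He) as [d [Hd Hd']].
      exists (mkposreal d Hd). intros h Hh0 Hh. simpl in Hh.
      rewrite Rplus_0_l, (rpow_nonpos 0) by lra.
      destruct (Rlt_le_dec 0 h).
      * rewrite rpow_pos by auto. 
        replace ((Rpower h q - 0) / h - 0) with (Rpower h (q-1)).
        rewrite Rabs_pos_eq. apply Hd'. rewrite Rabs_pos_eq in Hh; lra.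
        unfold Rpower; left; apply exp_pos.
        unfold Rpower. replace (q * ln h) with ((q - 1) * ln h + ln h) by ring.
        rewrite exp_plus, exp_ln by auto. field. lra.
      * rewrite rpow_nonpos by auto. replace ((0 - 0) / h - 0) with 0 by (field; auto).
        rewrite Rabs_R0; lra.
Qed.

Lemma cmult (f g : R -> R) x : continuous f x -> continuous g x -> continuous (fun y => f y * g y) x.
Proof. intros; apply (continuous_mult f g); auto. Qed.
Lemma cplus (f g : R -> R) x : continuous f x -> continuous g x -> continuous (fun y => f y + g y) x.
Proof. intros; apply (continuous_plus f g); auto. Qed.
Lemma cminus (f g : R -> R) x : continuous f x -> continuous g x -> continuous (fun y => f y - g y) x.
Proof. intros; apply (continuous_minus f g); auto. Qed.
Lemma cconst (c x : R) : continuous (fun _ : R => c) x.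
Proof. apply continuous_const. Qed.
Lemma cid (x : R) : continuous (fun y : R => y) x.
Proof. apply continuous_id. Qed.
Lemma cpow (f : R -> R) n x : continuous f x -> continuous (fun y => f y ^ n) x.
Proof. intros H; induction n; simpl. apply cconst. apply cmult; auto. Qed.
Lemma cinv (f : R -> R) x : continuous f x -> f x <> 0 -> continuous (fun y => / f y) x.
Proof. intros; apply continuous_Rinv_comp; auto. Qed.

Lemma ex_RInt_cont (f : R -> R) a b :
  (forall x, Rmin a b <= x <= Rmax a b -> continuous f x) -> ex_RInt f a b.
Proof. intros H. apply (ex_RInt_continuous (V:=R_CompleteNormedModule)); auto. Qed.

Lemma RInt_abs_le (f g : R -> R) a b : a <= b -> ex_RInt f a b -> ex_RInt g a b ->
  (forall x, a < x < b -> Rabs (f x) <= g x) -> Rabs (RInt f a b) <= RInt g a b.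
Proof.
  intros Hab Hf Hg H. apply Rabs_le. split.
  - assert (RInt (fun x => - g x) a b <= RInt f a b).
    { apply RInt_le; auto. apply (ex_RInt_opp g); auto.
      intros x Hx; specialize (H x Hx); apply Rabs_le_between in H; lra. }
    rewrite (RInt_opp g) in H0 by auto. unfold opp in H0; simpl in H0. lra.
  - apply RInt_le; auto. intros x Hx; specialize (H x Hx); apply Rabs_le_between in H; lra.
Qed.

Lemma RInt_minus_R (f g : R -> R) a b : ex_RInt f a b -> ex_RInt g a b ->
  RInt (fun x => f x - g x) a b = RInt f a b - RInt g a b.
Proof. intros; apply (RInt_minus f g); auto. Qed.
Lemma RInt_plus_R (f g : R -> R) a b : ex_RInt f a b -> ex_RInt g a b ->
  RInt (fun x => f x + g x) a b = RInt f a b + RInt g a b.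
Proof. intros; apply (RInt_plus f g); auto. Qed.
Lemma RInt_scal_R (f : R -> R) a b c : ex_RInt f a b ->
  RInt (fun x => c * f x) a b = c * RInt f a b.
Proof. intros; apply (RInt_scal f); auto. Qed.
Lemma RInt_Chasles_R (f : R -> R) a b c : ex_RInt f a b -> ex_RInt f b c ->
  RInt f a b + RInt f b c = RInt f a c.
Proof. intros; apply (RInt_Chasles f); auto. Qed.
Lemma is_RInt_plus_R (f g : R -> R) a b If Ig : is_RInt f a b If -> is_RInt g a b Ig ->
  is_RInt (fun x => f x + g x) a b (If + Ig).
Proof. intros; apply (is_RInt_plus f g); auto. Qed.
Lemma is_RInt_scal_R (f : R -> R) a b c If : is_RInt f a b If ->
  is_RInt (fun x => c * f x) a b (c * If).
Proof. intros; apply (is_RInt_scal f); auto. Qed.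
Lemma is_RInt_derive_R (F f : R -> R) a b :
  (forall x, Rmin a b <= x <= Rmax a b -> is_derive F x (f x)) ->
  (forall x, Rmin a b <= x <= Rmax a b -> continuous f x) ->
  is_RInt f a b (F b - F a).
Proof. intros; apply (is_RInt_derive F f); auto. Qed.

Lemma exp_INR_mult n x : exp (INR n * x) = exp x ^ n.
Proof. induction n. simpl. rewrite Rmult_0_l, exp_0; auto.
  rewrite S_INR, Rmult_plus_distr_r, Rmult_1_l, exp_plus, IHn. simpl; ring. Qed.

Fixpoint fsum (f : nat -> R) (N : nat) : R :=
  match N with O => 0 | S n => fsum f n + f n end.

Lemma fsum_ext f g N : (forall n, (n < N)%nat -> f n = g n) -> fsum f N = fsum g N.
Proof. induction N; simpl; intros H; auto. rewrite IHN, H; auto. Qed.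

Lemma is_RInt_fsum (F : nat -> R -> R) (I : nat -> R) a b N :
  (forall n, is_RInt (F n) a b (I n)) ->
  is_RInt (fun x => fsum (fun n => F n x) N) a b (fsum I N).
Proof.
  intros H. induction N; simpl.
  - apply (is_RInt_ext (fun _ => 0)). auto.
    assert (K := is_RInt_const (V:=R_NormedModule) a b 0).
    change (scal (b - a) 0) with ((b - a) * 0) in K. rewrite Rmult_0_r in K. exact K.
  - apply is_RInt_plus_R; auto.
Qed.

Section WG.
Variable p : R.
Hypothesis Hp : 1 < p.

Definition w u := / (1 + rpow u p).

Lemma w_pos u : 0 < w u.
Proof. unfold w. apply Rinv_0_lt_compat. pose proof (rpow_ge0 u p); lra. Qed.
Lemma w_le1 u : w u <= 1.
Proof. unfold w. pose proof (rpow_ge0 u p). rewrite <- Rinv_1. apply Rinv_le_contravar; lra. Qed.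

Lemma w_cont u : continuous w u.
Proof. unfold w. apply cinv. apply cplus. apply cconst. apply rpow_cont; lra.
  pose proof (rpow_ge0 u p); lra. Qed.

Lemma w_ex a b : ex_RInt w a b.
Proof. apply ex_RInt_cont; intros; apply w_cont. Qed.

Definition G X := RInt w 0 X.

Lemma G_mono X Y : X <= Y -> G X <= G Y.
Proof.
  intros H. unfold G. rewrite <- (RInt_Chasles_R w 0 X Y) by apply w_ex.
  assert (0 <= RInt w X Y). apply RInt_ge_0; auto. apply w_ex. intros; left; apply w_pos.
  lra.
Qed.

Lemma G_cont X : continuous G X.
Proof.
  apply (ex_derive_continuous G). exists (w X).
  apply (is_derive_RInt w G 0 X).
  apply filter_forall. intros b. apply (RInt_correct (V:=R_CompleteNormedModule)), w_ex.
  apply w_cont.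
Qed.

Lemma rpow_mono u v q : 0 < q -> 0 <= u <= v -> rpow u q <= rpow v q.
Proof.
  intros Hq [H1 H2]. destruct H1 as [H1|H1].
  - rewrite !rpow_pos by lra. unfold Rpower. destruct H2 as [H2|H2]; [|subst; lra].
    left. apply exp_increasing. apply Rmult_lt_compat_l; auto. apply ln_increasing; auto.
  - subst. rewrite rpow_nonpos by lra. apply rpow_ge0.
Qed.

Lemma G_pos X : 0 < X -> 0 < G X.
Proof.
  intros HX. apply Rlt_le_trans with (RInt (fun _ => w X) 0 X).
  rewrite RInt_const. unfold scal; simpl; unfold mult; simpl.
  rewrite Rminus_0_r. apply Rmult_lt_0_compat; auto. apply w_pos.
  apply RInt_le. lra. apply ex_RInt_const. apply w_ex.
  intros x Hx. unfold w. apply Rinv_le_contravar. pose proof (rpow_ge0 x p); lra.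
  apply Rplus_le_compat_l. apply rpow_mono; lra.
Qed.

Lemma G_ge0 X : 0 <= X -> 0 <= G X.
Proof. intros [H|H]. left; apply G_pos; auto. subst; unfold G; rewrite RInt_point; right; auto. Qed.

Lemma is_RInt_rpow_n n : is_RInt (fun u => rpow u p ^ n) 0 1 (/ (INR n * p + 1)).
Proof.
  assert (Hn : 0 < INR n * p + 1). { pose proof (pos_INR n). nra. }
  replace (/ (INR n * p + 1)) with ((fun u => u * rpow u p ^ n / (INR n * p + 1)) 1 -
                                    (fun u => u * rpow u p ^ n / (INR n * p + 1)) 0).
  2:{ simpl. rewrite (rpow_pos 1 p) by lra. unfold Rpower. rewrite ln_1, Rmult_0_r, exp_0, pow1. field. lra. }
  apply (is_RInt_derive_R (fun u => u * rpow u p ^ n / (INR n * p + 1))).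
  - intros x _.
    assert (D : is_derive (fun u => u * rpow u p ^ n) x
                  (1 * rpow x p ^ n + x * (INR n * (p * rpow x (p - 1)) * rpow x p ^ (pred n)))).
    { apply (is_derive_mult (fun u => u) (fun u => rpow u p ^ n)).
      apply (is_derive_id x).
      apply (is_derive_pow (fun u => rpow u p) n x). apply rpow_derive; auto.
      intros; apply Rmult_comm. }
    assert (E : x * rpow x (p - 1) = rpow x p).
    { destruct (Rlt_le_dec 0 x).
      rewrite !rpow_pos by auto. unfold Rpower. replace (p * ln x) with ((p - 1) * ln x + ln x) by ring.
      rewrite exp_plus, exp_ln; auto; ring.
      rewrite !rpow_nonpos by auto. ring. }
    assert (E2 : 1 * rpow x p ^ n + x * (INR n * (p * rpow x (p - 1)) * rpow x p ^ (pred n)) =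
                 rpow x p ^ n * (INR n * p + 1)).
    { destruct n. simpl. ring.
      simpl pred. replace (x * (INR (S n) * (p * rpow x (p - 1)) * rpow x p ^ n)) with
        (INR (S n) * p * rpow x p ^ n * (x * rpow x (p - 1))) by ring. rewrite E. simpl. ring. }
    rewrite E2 in D.
    apply (is_derive_ext (fun u => / (INR n * p + 1) * (u * rpow u p ^ n))).
    intros t; simpl; unfold Rdiv; ring.
    replace (rpow x p ^ n) with (/ (INR n * p + 1) * (rpow x p ^ n * (INR n * p + 1))) by (field; lra).
    apply (is_derive_scal (fun u => u * rpow u p ^ n)). auto.
  - intros x _. apply cpow. apply rpow_cont; lra.
Qed.

End WG.

Ltac toR := match goal with |- ?a = ?b => change (@eq R a b) end.

Lemma geom_id (y : R) (N : nat) : 1 + y <> 0 ->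
  / (1 + y) = fsum (fun k => (-1) ^ k * y ^ k) N + (-1) ^ N * y ^ N / (1 + y).
Proof.
  intros H. induction N; simpl. field; auto.
  rewrite IHN at 1. field. auto.
Qed.

Lemma fsum_plus f g N : fsum (fun n => f n + g n) N = fsum f N + fsum g N.
Proof. induction N; simpl; [ring|rewrite IHN; ring]. Qed.
Lemma fsum_minus f g N : fsum (fun n => f n - g n) N = fsum f N - fsum g N.
Proof. induction N; simpl; [ring|rewrite IHN; ring]. Qed.
Lemma fsum_bound f b N : (forall n, (n < N)%nat -> Rabs (f n) <= b) -> Rabs (fsum f N) <= INR N * b.
Proof.
  induction N; cbn [fsum]; intros H. rewrite Rabs_R0; simpl; lra.
  rewrite S_INR. eapply Rle_trans. apply Rabs_triang.
  assert (Rabs (fsum f N) <= INR N * b) by (apply IHN; intros; apply H; lia).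
  assert (Rabs (f N) <= b) by (apply H; lia). lra.
Qed.

Definition E (c u : R) := exp (c * ln u).

Lemma E_cont c u : 0 < u -> continuous (E c) u.
Proof. intros Hu. apply (ex_derive_continuous (E c)). unfold E. auto_derive. auto. Qed.

Lemma is_RInt_E c X : 1 <= X -> c <> -1 ->
  is_RInt (E c) 1 X ((exp ((c + 1) * ln X) - 1) / (c + 1)).
Proof.
  intros HX Hc.
  replace ((exp ((c + 1) * ln X) - 1) / (c + 1)) with
    ((fun u => exp ((c + 1) * ln u) / (c + 1)) X - (fun u => exp ((c + 1) * ln u) / (c + 1)) 1).
  2:{ simpl. rewrite ln_1, Rmult_0_r, exp_0. field. lra. }
  apply (is_RInt_derive_R (fun u => exp ((c + 1) * ln u) / (c + 1))).
  - intros x Hx. rewrite Rmin_left, Rmax_right in Hx by lra.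
    auto_derive. lra. unfold E. replace ((c + 1) * ln x) with (c * ln x + ln x) by ring.
    rewrite exp_plus, exp_ln by lra. field. split; lra.
  - intros x Hx. rewrite Rmin_left, Rmax_right in Hx by lra. apply E_cont; lra.
Qed.

Section Exp.
Variable p : R.
Hypothesis Hp : 1 < p.

Lemma A_bound N : Rabs (G p 1 - fsum (fun n => (-1) ^ n * / (INR n * p + 1)) N) <= / (INR N * p + 1).
Proof.
  assert (HI : is_RInt (fun u => fsum (fun n => (-1) ^ n * rpow u p ^ n) N) 0 1
                 (fsum (fun n => (-1) ^ n * / (INR n * p + 1)) N)).
  { apply (is_RInt_fsum (fun n u => (-1) ^ n * rpow u p ^ n)). intros n.
    apply is_RInt_scal_R. apply is_RInt_rpow_n; auto. }
  rewrite <- (is_RInt_unique _ _ _ _ HI).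
  unfold G. rewrite <- RInt_minus_R.
  2: apply w_ex; auto. 2: eexists; exact HI.
  rewrite (RInt_ext _ (fun u => (-1) ^ N * rpow u p ^ N * w p u)).
  2:{ intros x _. unfold w. rewrite (geom_id (rpow x p) N) at 1. toR. field.
      pose proof (rpow_ge0 x p); lra. pose proof (rpow_ge0 x p); lra. }
  rewrite <- (is_RInt_unique _ _ _ _ (is_RInt_rpow_n p Hp N)).
  apply RInt_abs_le. lra.
  apply ex_RInt_cont. intros. apply cmult. apply cmult. apply cconst. apply cpow, rpow_cont; lra. apply w_cont; auto.
  eexists; apply is_RInt_rpow_n; auto.
  intros x _. rewrite !Rabs_mult, pow_1_abs, Rmult_1_l.
  rewrite (Rabs_pos_eq (rpow x p ^ N)) by (apply pow_le, rpow_ge0).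
  rewrite Rabs_pos_eq by (left; apply w_pos; auto).
  pose proof (w_le1 p x). pose proof (pow_le _ N (rpow_ge0 x p)). nra.
Qed.

Lemma w_expand u N : 0 < u ->
  w p u = fsum (fun k => (-1) ^ k * E (- (INR k + 1) * p) u) N + (-1) ^ N * E (- INR N * p) u * w p u.
Proof.
  intros Hu. set (v := exp (- p * ln u)).
  assert (Hv : 0 < v) by apply exp_pos.
  assert (Ek : forall k, E (- INR k * p) u = v ^ k).
  { intros k. unfold E, v. rewrite <- exp_INR_mult. f_equal; ring. }
  assert (Ek1 : forall k, E (- (INR k + 1) * p) u = v ^ (S k)).
  { intros k. rewrite <- Ek. rewrite S_INR. auto. }
  assert (Hw : w p u = v / (1 + v)).
  { unfold w. rewrite rpow_pos by auto. unfold Rpower, v.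
    replace (- p * ln u) with (- (p * ln u)) by ring. rewrite exp_Ropp. field.
    pose proof (exp_pos (p * ln u)). split; lra. }
  rewrite (fsum_ext _ (fun k => v * ((-1) ^ k * v ^ k))).
  2:{ intros k _. rewrite Ek1. simpl; ring. }
  rewrite Ek, Hw.
  assert (K := geom_id v N ltac:(lra)).
  assert (fsum (fun k => v * ((-1) ^ k * v ^ k)) N = v * fsum (fun k => (-1) ^ k * v ^ k) N).
  { clear. induction N; simpl. ring. rewrite IHN; ring. }
  rewrite H. unfold Rdiv. rewrite K at 1. field. lra.
Qed.

Lemma B_bound X N : 1 <= X ->
  Rabs (RInt (w p) 1 X -
        fsum (fun k => (-1) ^ k * ((exp ((- (INR k + 1) * p + 1) * ln X) - 1) / (- (INR k + 1) * p + 1))) N)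
  <= / ((INR N + 1) * p - 1).
Proof.
  intros HX.
  assert (Hc : forall k, - (INR k + 1) * p <> -1).
  { intros k. pose proof (pos_INR k). nra. }
  assert (HI : is_RInt (fun u => fsum (fun k => (-1) ^ k * E (- (INR k + 1) * p) u) N) 1 X
     (fsum (fun k => (-1) ^ k * ((exp ((- (INR k + 1) * p + 1) * ln X) - 1) / (- (INR k + 1) * p + 1))) N)).
  { apply (is_RInt_fsum (fun k u => (-1) ^ k * E (- (INR k + 1) * p) u)). intros k.
    apply is_RInt_scal_R. apply is_RInt_E; auto. }
  rewrite <- (is_RInt_unique _ _ _ _ HI).
  rewrite <- RInt_minus_R.
  2: apply w_ex; auto. 2: eexists; exact HI.
  rewrite (RInt_ext _ (fun u => (-1) ^ N * E (- INR N * p) u * w p u)).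
  2:{ intros x Hx. rewrite Rmin_left, Rmax_right in Hx by lra.
      rewrite (w_expand x N) at 1 by lra. toR; ring. }
  eapply Rle_trans. apply RInt_abs_le with (g := E (- (INR N + 1) * p)). lra.
  apply ex_RInt_cont. intros x Hx. rewrite Rmin_left, Rmax_right in Hx by lra.
  apply cmult. apply cmult. apply cconst. apply E_cont; lra. apply w_cont; auto.
  eexists; apply is_RInt_E; auto.
  - intros x Hx.
    assert (Hx0 : 0 < x) by lra.
    rewrite !Rabs_mult, pow_1_abs, Rmult_1_l.
    rewrite (Rabs_pos_eq (E _ x)) by (left; apply exp_pos).
    rewrite (Rabs_pos_eq (w p x)) by (left; apply w_pos; auto).
    assert (Hwv : w p x <= E (- (INR 0 + 1) * p) x).
    { rewrite (w_expand x 1) at 1 by lra. cbn [fsum pow].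
      assert (0 < E (- INR 1 * p) x) by apply exp_pos. pose proof (w_pos p x).
      assert (0 < E (- INR 1 * p) x * w p x) by (apply Rmult_lt_0_compat; auto). lra. }
    assert (E (- INR N * p) x * E (- (INR 0 + 1) * p) x = E (- (INR N + 1) * p) x).
    { unfold E. rewrite <- exp_plus. f_equal. simpl. ring. }
    rewrite <- H.
    assert (0 < E (- INR N * p) x) by apply exp_pos.
    apply Rmult_le_compat_l; lra.
  - rewrite (is_RInt_unique _ _ _ _ (is_RInt_E _ X HX (Hc N))).
    assert (Hd : 0 < (INR N + 1) * p - 1). { pose proof (pos_INR N). nra. }
    assert (0 < exp ((- (INR N + 1) * p + 1) * ln X)) by apply exp_pos.
    replace (- (INR N + 1) * p + 1) with (- ((INR N + 1) * p - 1)) by ring.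
    unfold Rdiv. rewrite <- Ropp_inv_permute by lra.
    apply Rmult_le_reg_l with ((INR N + 1) * p - 1); auto.
    field_simplify; try lra. pose proof (exp_pos (- ((INR N + 1) * p - 1) * ln X)). lra.
Qed.

End Exp.

Section GL.
Variable p : R.
Hypothesis Hp : 1 < p.

Definition T N := fsum (fun n => (-1) ^ n * (/ (INR n * p + 1) + / ((INR n + 1) * p - 1))) N.

Lemma G_T_bound X N : 1 <= X ->
  Rabs (G p X - T N) <= / (INR N * p + 1) + / ((INR N + 1) * p - 1) + INR N * (exp ((1 - p) * ln X) / (p - 1)).
Proof.
  intros HX.
  set (a := fun n => (-1) ^ n * / (INR n * p + 1)).
  set (b := fun n : nat => (-1) ^ n * / ((INR n + 1) * p - 1)).
  set (d := fun k : nat => (-1) ^ k * (exp ((- (INR k + 1) * p + 1) * ln X) / ((INR k + 1) * p - 1))).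
  assert (HT : T N = fsum a N + fsum b N).
  { unfold T. rewrite <- fsum_plus. apply fsum_ext; intros; unfold a, b; ring. }
  assert (HB : fsum (fun k => (-1) ^ k * ((exp ((- (INR k + 1) * p + 1) * ln X) - 1) / (- (INR k + 1) * p + 1))) N
               = fsum b N - fsum d N).
  { rewrite <- fsum_minus. apply fsum_ext; intros k _. unfold b, d.
    assert (0 < (INR k + 1) * p - 1) by (pose proof (pos_INR k); nra).
    field. lra. }
  assert (HG : G p X = G p 1 + RInt (w p) 1 X).
  { unfold G. rewrite RInt_Chasles_R; auto; apply w_ex; auto. }
  pose proof (A_bound p Hp N) as HA.
  pose proof (B_bound p Hp X N HX) as HBb. rewrite HB in HBb.
  assert (Hd : Rabs (fsum d N) <= INR N * (exp ((1 - p) * ln X) / (p - 1))).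
  { apply fsum_bound. intros k _. unfold d.
    rewrite Rabs_mult, pow_1_abs, Rmult_1_l.
    assert (0 < (INR k + 1) * p - 1) by (pose proof (pos_INR k); nra).
    rewrite Rabs_pos_eq.
    2:{ apply Rmult_le_pos. left; apply exp_pos. left; apply Rinv_0_lt_compat; auto. }
    unfold Rdiv. apply Rmult_le_compat. left; apply exp_pos. left; apply Rinv_0_lt_compat; auto.
    assert (0 <= ln X). { rewrite <- ln_1. destruct HX. left; apply ln_increasing; lra. subst; lra. }
    assert ((- (INR k + 1) * p + 1) * ln X <= (1 - p) * ln X).
    { apply Rmult_le_compat_r; auto. pose proof (pos_INR k). nra. }
    destruct H1. left; apply exp_increasing; auto. rewrite H1; lra.
    apply Rinv_le_contravar. lra. pose proof (pos_INR k). nra. }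
  rewrite HT, HG.
  replace (G p 1 + RInt (w p) 1 X - (fsum a N + fsum b N)) with
    ((G p 1 - fsum a N) + (RInt (w p) 1 X - (fsum b N - fsum d N)) - fsum d N) by ring.
  eapply Rle_trans. apply Rabs_triang. rewrite Rabs_Ropp.
  eapply Rle_trans. apply Rplus_le_compat_r. apply Rabs_triang.
  unfold a. lra.
Qed.

Lemma G_limit L : (forall eps, 0 < eps -> exists N0, forall N, (N0 <= N)%nat -> Rabs (T N - L) < eps) ->
  forall eps, 0 < eps -> exists X0, 1 <= X0 /\ forall X, X0 <= X -> Rabs (G p X - L) < eps.
Proof.
  intros HL eps He.
  destruct (HL (eps / 4)) as [N0 HN0]. lra.
  destruct (archimed ((4 / eps + 1) / p)) as [Hz _].
  set (N1 := Z.to_nat (up ((4 / eps + 1) / p))).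
  assert (HN1 : (4 / eps + 1) / p < INR N1).
  { unfold N1. rewrite INR_IZR_INZ, Z2Nat.id. auto.
    apply le_IZR. assert (0 < (4 / eps + 1) / p). apply Rdiv_lt_0_compat; [|lra].
    assert (0 < 4 / eps) by (apply Rdiv_lt_0_compat; lra). lra. lra. }
  set (N := Nat.max N0 N1).
  assert (HNN : INR N1 <= INR N) by (apply le_INR; lia).
  assert (Hp0 : 0 < p) by lra.
  assert (HNp : 4 / eps + 1 < INR N * p).
  { apply Rmult_lt_compat_r with (r := p) in HN1; auto. unfold Rdiv in HN1.
    rewrite Rmult_assoc, Rinv_l, Rmult_1_r in HN1 by lra. nra. }
  assert (H4 : 0 < 4 / eps) by (apply Rdiv_lt_0_compat; lra).
  assert (Ha : / (INR N * p + 1) < eps / 4).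
  { replace (eps / 4) with (/ (4 / eps)) by (field; lra). apply Rinv_lt_contravar. nra. lra. }
  assert (Hb : / ((INR N + 1) * p - 1) < eps / 4).
  { replace (eps / 4) with (/ (4 / eps)) by (field; lra). apply Rinv_lt_contravar. nra. nra. }
  set (del := eps * (p - 1) / (4 * (INR N + 1))).
  assert (Hdel : 0 < del). { unfold del. pose proof (pos_INR N). apply Rdiv_lt_0_compat; nra. }
  exists (Rmax 1 (exp (ln del / (1 - p)) + 1)). split. apply Rmax_l.
  intros X HX.
  assert (HX1 : 1 <= X) by (eapply Rle_trans; [apply Rmax_l|apply HX]).
  assert (HX2 : exp (ln del / (1 - p)) < X) by (eapply Rlt_le_trans; [|eapply Rle_trans; [apply Rmax_r|apply HX]]; lra).
  assert (Hexp : exp ((1 - p) * ln X) < del).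
  { rewrite <- (exp_ln del Hdel). apply exp_increasing.
    assert (ln del / (1 - p) < ln X).
    { rewrite <- (ln_exp (ln del / (1 - p))). apply ln_increasing; auto. apply exp_pos. }
    apply Rmult_lt_compat_l with (r := p - 1) in H; [|lra].
    replace ((p - 1) * (ln del / (1 - p))) with (- ln del) in H by (field; lra). lra. }
  assert (Hc : INR N * (exp ((1 - p) * ln X) / (p - 1)) < eps / 4).
  { apply Rle_lt_trans with (INR N * (del / (p - 1))).
    apply Rmult_le_compat_l. apply pos_INR. unfold Rdiv. apply Rmult_le_compat_r.
    left; apply Rinv_0_lt_compat; lra. lra.
    unfold del. pose proof (pos_INR N).
    replace (INR N * (eps * (p - 1) / (4 * (INR N + 1)) / (p - 1))) with ((eps / 4) * (INR N / (INR N + 1))) by (field; lra).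
    assert (INR N / (INR N + 1) < 1). { apply (Rmult_lt_reg_r (INR N + 1)). lra. unfold Rdiv. rewrite Rmult_assoc, Rinv_l; lra. }
    nra. }
  pose proof (G_T_bound X N HX1).
  assert (Rabs (T N - L) < eps / 4) by (apply HN0; unfold N; lia).
  replace (G p X - L) with ((G p X - T N) + (T N - L)) by ring.
  eapply Rle_lt_trans. apply Rabs_triang. lra.
Qed.

Lemma G_le_limit L : (forall eps, 0 < eps -> exists X0, 1 <= X0 /\ forall X, X0 <= X -> Rabs (G p X - L) < eps) ->
  forall X, G p X <= L.
Proof.
  intros H X. destruct (Rle_lt_dec (G p X) L) as [h|h]; auto.
  destruct (H (G p X - L)) as [X0 [H1 H2]]. lra.
  specialize (H2 (Rmax X0 X) (Rmax_l _ _)).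
  pose proof (G_mono p Hp X (Rmax X0 X) (Rmax_r _ _)).
  apply Rabs_lt_between in H2. lra.
Qed.

End GL.

Lemma sin_plus_nPI y n : sin (y + INR n * PI) = (-1) ^ n * sin y.
Proof.
  induction n. simpl. rewrite Rmult_0_l, Rplus_0_r; ring.
  rewrite S_INR. replace (y + (INR n + 1) * PI) with ((y + INR n * PI) + PI) by ring.
  rewrite neg_sin, IHn. simpl; ring.
Qed.

Lemma sin_minus_nPI y n : sin (y - INR n * PI) = (-1) ^ n * sin y.
Proof.
  induction n. simpl. rewrite Rmult_0_l, Rminus_0_r; ring.
  rewrite S_INR. 
  assert (sin (y - INR n * PI) = - sin (y - (INR n + 1) * PI)).
  { rewrite <- neg_sin. f_equal. ring. }
  rewrite IHn in H. simpl. lra.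
Qed.

Lemma fsum_S f N : fsum f (S N) = fsum f N + f N.
Proof. reflexivity. Qed.

Section Fourier.
Variable s : R.
Hypothesis Hs : 0 < s < 1.

Lemma is_RInt_coscos n :
  is_RInt (fun x => cos (s * x) * cos (INR n * x)) 0 PI ((-1) ^ n * sin (PI * s) * s / (s ^ 2 - INR n ^ 2)).
Proof.
  assert (Hn : 0 <= INR n) by apply pos_INR.
  assert (H1 : s - INR n <> 0).
  { destruct n. simpl; lra. rewrite S_INR. pose proof (pos_INR n). lra. }
  assert (H2 : s + INR n <> 0) by lra.
  set (F := fun x => (sin ((s - INR n) * x) / (s - INR n) + sin ((s + INR n) * x) / (s + INR n)) / 2).
  replace ((-1) ^ n * sin (PI * s) * s / (s ^ 2 - INR n ^ 2)) with (F PI - F 0).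
  2:{ unfold F. rewrite !Rmult_0_r, sin_0.
      replace ((s - INR n) * PI) with (PI * s - INR n * PI) by ring.
      replace ((s + INR n) * PI) with (PI * s + INR n * PI) by ring.
      rewrite sin_plus_nPI, sin_minus_nPI. field. split; auto.
      replace (s ^ 2 - INR n ^ 2) with ((s - INR n) * (s + INR n)) by ring.
      apply Rmult_integral_contrapositive; auto. }
  apply (is_RInt_derive_R F).
  - intros x _. unfold F. auto_derive. auto.
    
    replace ((s - INR n) * x) with (s * x - INR n * x) by ring.
    replace ((s + INR n) * x) with (s * x + INR n * x) by ring.
    rewrite cos_minus, cos_plus. field. auto.
  - intros x _. apply (ex_derive_continuous (fun x => cos (s * x) * cos (INR n * x))). auto_derive. auto.
Qed.

Lemma is_RInt_cosn n :
  is_RInt (fun x => cos (INR n * x)) 0 PI (match n with O => PI | S _ => 0 end).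
Proof.
  destruct n.
  - apply (is_RInt_ext (fun _ => 1)). intros; simpl; rewrite Rmult_0_l, cos_0; auto.
    assert (K := is_RInt_const (V:=R_NormedModule) 0 PI 1).
    change (scal (PI - 0) 1) with ((PI - 0) * 1) in K. replace ((PI - 0) * 1) with PI in K by ring. exact K.
  - assert (Hn : 0 < INR (S n)) by (apply lt_0_INR; lia).
    assert (Hsin : sin (INR (S n) * PI) = 0).
    { replace (INR (S n) * PI) with (0 + INR (S n) * PI) by ring. rewrite sin_plus_nPI, sin_0. ring. }
    set (m := INR (S n)) in *. clearbody m.
    assert (K : is_RInt (fun x => cos (m * x)) 0 PI
              (sin (m * PI) / m - sin (m * 0) / m)).
    { apply (is_RInt_derive_R (fun x => sin (m * x) / m)).
      + intros x _. auto_derive. lra. toR; field. lra.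
      + intros x _. apply (ex_derive_continuous (fun x => cos (m * x))). auto_derive. auto. }
    replace (sin (m * PI) / m - sin (m * 0) / m) with 0 in K. exact K.
    rewrite Rmult_0_r, sin_0, Hsin. field. lra.
Qed.

Definition D N x := -1 + 2 * fsum (fun n => cos (INR n * x)) (S N).

Lemma D_cont N x : continuous (D N) x.
Proof.
  unfold D. apply cplus. apply cconst. apply cmult. apply cconst.
  generalize (S N). induction n; simpl. apply cconst. apply cplus; auto.
  apply (ex_derive_continuous (fun x => cos (INR n * x))). auto_derive. auto.
Qed.

Lemma D_sin N x : D N x * sin (x / 2) = sin ((INR N + / 2) * x).
Proof.
  induction N.
  - unfold D. simpl. rewrite Rmult_0_l, cos_0. replace ((0 + / 2) * x) with (x / 2) by field. ring.
  - unfold D in *. rewrite (fsum_S _ (S N)).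
    replace ((-1 + 2 * (fsum (fun n => cos (INR n * x)) (S N) + cos (INR (S N) * x))) * sin (x / 2))
      with ((-1 + 2 * fsum (fun n => cos (INR n * x)) (S N)) * sin (x / 2) + 2 * cos (INR (S N) * x) * sin (x / 2)) by ring.
    rewrite IHN. rewrite S_INR.
    replace ((INR N + 1 + / 2) * x) with ((INR N + 1) * x + x / 2) by field.
    replace ((INR N + / 2) * x) with ((INR N + 1) * x - x / 2) by field.
    rewrite sin_plus, sin_minus. ring.
Qed.

Lemma is_RInt_cosD N :
  is_RInt (fun x => cos (s * x) * D N x) 0 PI
    (- (sin (PI * s) / s) + 2 * fsum (fun n => (-1) ^ n * sin (PI * s) * s / (s ^ 2 - INR n ^ 2)) (S N)).
Proof.
  apply (is_RInt_ext (fun x => -1 * (cos (s * x) * cos (INR 0 * x)) + 2 * fsum (fun n => cos (s * x) * cos (INR n * x)) (S N))).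
  - intros x _. unfold D. simpl INR. rewrite Rmult_0_l, cos_0.
    assert (fsum (fun n => cos (s * x) * cos (INR n * x)) (S N) = cos (s * x) * fsum (fun n => cos (INR n * x)) (S N)).
    { generalize (S N). induction n; simpl. ring. rewrite IHn; ring. }
    rewrite H. toR; ring.
  - apply is_RInt_plus_R.
    + replace (- (sin (PI * s) / s)) with (-1 * ((-1) ^ 0 * sin (PI * s) * s / (s ^ 2 - INR 0 ^ 2))).
      apply is_RInt_scal_R. apply is_RInt_coscos. simpl. field. lra.
    + apply is_RInt_scal_R. apply (is_RInt_fsum (fun n x => cos (s * x) * cos (INR n * x))).
      intros n. apply is_RInt_coscos.
Qed.

Lemma is_RInt_D N : is_RInt (D N) 0 PI PI.
Proof.
  apply (is_RInt_ext (fun x => -1 + 2 * fsum (fun n => cos (INR n * x)) (S N))). intros; auto.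
  assert (E : -1 * PI + 2 * fsum (fun n => match n with O => PI | S _ => 0 end) (S N) = PI).
  { induction N. simpl. ring. rewrite fsum_S. lra. }
  rewrite <- E at 2.
  apply is_RInt_plus_R.
  - assert (K := is_RInt_const (V:=R_NormedModule) 0 PI (-1)).
    change (scal (PI - 0) (-1)) with ((PI - 0) * (-1)) in K. replace ((PI - 0) * (-1)) with (-1 * PI) in K by ring. exact K.
  - apply is_RInt_scal_R. apply (is_RInt_fsum (fun n x => cos (INR n * x))). intros; apply is_RInt_cosn.
Qed.

Definition U N := fsum (fun n => (-1) ^ n * (/ (INR n + s) + / (INR n + 1 - s))) N.
Definition V N := - / s + 2 * fsum (fun n => (-1) ^ n * s / (s ^ 2 - INR n ^ 2)) (S N).

Lemma U_V N : U (S N) = V N + (-1) ^ N / (INR N + 1 - s).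
Proof.
  induction N.
  - unfold U, V. simpl. field. lra.
  - unfold U, V in *. rewrite !(fsum_S _ (S N)). rewrite IHN. rewrite S_INR.
    pose proof (pos_INR N).
    assert (s ^ 2 - (INR N + 1) ^ 2 <> 0).
    { replace (s ^ 2 - (INR N + 1) ^ 2) with ((s - (INR N + 1)) * (s + (INR N + 1))) by ring.
      apply Rmult_integral_contrapositive; split; lra. }
    simpl pow. simpl pow in H0. field. repeat split; try lra; auto.
Qed.

Lemma int_cosD_eq N : sin (PI * s) * V N = RInt (fun x => cos (s * x) * D N x) 0 PI.
Proof.
  rewrite (is_RInt_unique _ _ _ _ (is_RInt_cosD N)). unfold V.
  assert (forall M, fsum (fun n => (-1) ^ n * sin (PI * s) * s / (s ^ 2 - INR n ^ 2)) M =
                    sin (PI * s) * fsum (fun n => (-1) ^ n * s / (s ^ 2 - INR n ^ 2)) M).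
  { induction M. simpl; ring. rewrite !fsum_S, IHM. unfold Rdiv; ring. }
  rewrite H. field. lra.
Qed.

End Fourier.

Lemma sin_half_pos x : 0 < x <= PI -> 0 < sin (x / 2).
Proof. intros. apply sin_gt_0; pose proof PI_RGT_0; lra. Qed.

Lemma sin_half_mono x y : 0 <= x <= y -> y <= PI -> sin (x / 2) <= sin (y / 2).
Proof.
  intros [H1 H2] H3. destruct H2 as [H2|H2]; [|subst; lra].
  left. apply sin_increasing_1; pose proof PI_RGT_0; lra.
Qed.

Lemma exists_nat_gt (K : R) : exists N : nat, K < INR N.
Proof.
  destruct (Rle_lt_dec K 0).
  - exists 1%nat. simpl; lra.
  - destruct (archimed K) as [Hz _]. exists (Z.to_nat (up K)).
    rewrite INR_IZR_INZ, Z2Nat.id; auto. apply le_IZR. simpl. lra.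
Qed.

Section RL.
Variable s : R.
Hypothesis Hs : 0 < s < 1.

Definition g x := (cos (s * x) - 1) / sin (x / 2).
Definition gd x := (- s * sin (s * x) * sin (x / 2) - (cos (s * x) - 1) * (cos (x / 2) / 2)) / (sin (x / 2)) ^ 2.

Lemma key_bound x c : 0 < x <= PI -> Rabs c <= 1 ->
  Rabs ((cos (s * x) - 1) * c / sin (x / 2)) <= 2.
Proof.
  intros Hx Hc.
  assert (Hb : 0 < sin (x / 2)) by (apply sin_half_pos; auto).
  set (a := sin (s * x / 2)).
  assert (Ha0 : 0 <= a). { unfold a. apply sin_ge_0; pose proof PI_RGT_0; nra. }
  assert (Hab : a <= sin (x / 2)). { unfold a. apply sin_half_mono; nra. }
  assert (Ha1 : a <= 1) by (unfold a; apply SIN_bound).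
  assert (Hcos : cos (s * x) - 1 = - 2 * a * a).
  { unfold a. replace (s * x) with (2 * (s * x / 2)) at 1 by field. rewrite cos_2a_sin. ring. }
  rewrite Hcos.
  set (X := -2 * a * a * c / sin (x / 2)).
  assert (HX : X * sin (x / 2) = -2 * a * a * c) by (unfold X; field; lra).
  apply Rabs_le_between in Hc.
  assert (a * a <= sin (x / 2)) by nra.
  apply Rabs_le. split; nra.
Qed.

Lemma g_bound x : 0 < x <= PI -> Rabs (g x) <= 2.
Proof. intros Hx. unfold g. replace (cos (s * x) - 1) with ((cos (s * x) - 1) * 1) by ring.
  apply key_bound; auto. rewrite Rabs_R1; lra. Qed.

Lemma h_bound N x : 0 < x <= PI -> Rabs ((cos (s * x) - 1) * D N x) <= 2.
Proof.
  intros Hx. assert (Hb : 0 < sin (x / 2)) by (apply sin_half_pos; auto).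
  replace (D N x) with (sin ((INR N + / 2) * x) / sin (x / 2)).
  unfold Rdiv. rewrite <- Rmult_assoc. apply key_bound; auto. apply Rabs_le, SIN_bound.
  rewrite <- D_sin. field. lra.
Qed.

Lemma gd_bound d x : 0 < d -> d <= x <= PI -> Rabs (gd x) <= 2 / (sin (d / 2)) ^ 2.
Proof.
  intros Hd Hx.
  assert (Hb : 0 < sin (d / 2)) by (apply sin_half_pos; lra).
  assert (Hbx : sin (d / 2) <= sin (x / 2)) by (apply sin_half_mono; lra).
  unfold gd, Rdiv. rewrite Rabs_mult.
  rewrite (Rabs_pos_eq (/ _)) by (left; apply Rinv_0_lt_compat; nra).
  apply Rmult_le_compat. apply Rabs_pos. left; apply Rinv_0_lt_compat; nra.
  - pose proof (SIN_bound (s * x)). pose proof (SIN_bound (x / 2)).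
    pose proof (COS_bound (s * x)). pose proof (COS_bound (x / 2)).
    set (u := sin (s * x)) in *. set (v := sin (x / 2)) in *. set (w := cos (s * x)) in *. set (z := cos (x / 2)) in *.
    assert (-1 <= u * v <= 1) by (split; nra).
    assert (-1 <= s * (u * v) <= 1) by (split; nra).
    assert (-2 <= (w - 1) * z <= 2) by (split; nra).
    change (sin (x * / 2)) with v. change (cos (x * / 2)) with z. apply Rabs_le. split; nra.
  - apply Rinv_le_contravar. nra. nra.
Qed.

Lemma g_derive x : sin (x / 2) <> 0 -> is_derive g x (gd x).
Proof. intros H. unfold g, gd. auto_derive. auto. toR. unfold Rdiv in *. field. auto. Qed.

Lemma IBP_bound d M : 0 < d < PI -> 0 < M ->
  Rabs (RInt (fun x => g x * sin (M * x)) d PI) <= (4 + 2 * PI / (sin (d / 2)) ^ 2) / M.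
Proof.
  intros Hd HM.
  assert (Hsn : forall x, d <= x <= PI -> sin (x / 2) <> 0).
  { intros x Hx. apply Rgt_not_eq, sin_half_pos; lra. }
  set (F := fun x => - g x * cos (M * x) / M).
  set (F' := fun x => - gd x * cos (M * x) / M + g x * sin (M * x)).
  assert (HF : forall x, d <= x <= PI -> is_derive F x (F' x)).
  { intros x Hx. unfold F, F'.
    apply (is_derive_ext (fun x => / M * (- g x * cos (M * x)))). intros; toR; field; lra.
    replace (- gd x * cos (M * x) / M + g x * sin (M * x)) with
      (/ M * (- gd x * cos (M * x) + - g x * (- (M * sin (M * x))))) by (field; lra).
    apply is_derive_scal.
    apply (is_derive_mult (fun x => - g x) (fun x => cos (M * x))).
    apply (is_derive_opp g). apply g_derive; auto.
    auto_derive. auto. toR; ring. intros; apply Rmult_comm. }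
  assert (Hcont : forall x, d <= x <= PI -> continuous F' x).
  { intros x Hx. apply (ex_derive_continuous F'). unfold F', g, gd.
    assert (Hsx : sin (x * / 2) <> 0) by (apply Hsn; auto). auto_derive.
    repeat split; auto; repeat apply Rmult_integral_contrapositive_currified; auto; lra. }
  assert (Hgdc : forall x, d <= x <= PI -> continuous (fun x => gd x * cos (M * x) / M) x).
  { intros x Hx. apply (ex_derive_continuous (fun x => gd x * cos (M * x) / M)). unfold gd.
    assert (Hsx : sin (x * / 2) <> 0) by (apply Hsn; auto). auto_derive.
    repeat split; auto; repeat apply Rmult_integral_contrapositive_currified; auto; lra. }
  assert (HI1 : is_RInt F' d PI (F PI - F d)).
  { apply (is_RInt_derive_R F F'). intros x Hx; rewrite Rmin_left, Rmax_right in Hx by lra. apply HF; lra.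
    intros x Hx; rewrite Rmin_left, Rmax_right in Hx by lra. apply Hcont; lra. }
  assert (Hex2 : ex_RInt (fun x => gd x * cos (M * x) / M) d PI).
  { apply ex_RInt_cont. intros x Hx; rewrite Rmin_left, Rmax_right in Hx by lra. apply Hgdc; lra. }
  rewrite (RInt_ext _ (fun x => F' x + gd x * cos (M * x) / M)).
  2:{ intros x _. unfold F'. toR. field. lra. }
  rewrite RInt_plus_R; [|eexists; exact HI1|auto].
  rewrite (is_RInt_unique _ _ _ _ HI1).
  assert (B1 : Rabs (F PI - F d) <= 4 / M).
  { unfold F. pose proof (g_bound PI ltac:(pose proof PI_RGT_0; lra)). pose proof (g_bound d ltac:(lra)).
    pose proof (COS_bound (M * PI)). pose proof (COS_bound (M * d)).
    replace (- g PI * cos (M * PI) / M - - g d * cos (M * d) / M) with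
      ((- g PI * cos (M * PI) + g d * cos (M * d)) / M) by (field; lra).
    unfold Rdiv. rewrite Rabs_mult, (Rabs_pos_eq (/ M)) by (left; apply Rinv_0_lt_compat; auto).
    apply Rmult_le_compat_r. left; apply Rinv_0_lt_compat; auto.
    eapply Rle_trans. apply Rabs_triang. rewrite !Rabs_mult, Rabs_Ropp.
    assert (Rabs (cos (M * PI)) <= 1) by (apply Rabs_le; auto).
    assert (Rabs (cos (M * d)) <= 1) by (apply Rabs_le; auto).
    pose proof (Rabs_pos (g PI)). pose proof (Rabs_pos (g d)).
    pose proof (Rabs_pos (cos (M * PI))). pose proof (Rabs_pos (cos (M * d))). nra. }
  assert (B2 : Rabs (RInt (fun x => gd x * cos (M * x) / M) d PI) <= PI * (2 / (sin (d / 2)) ^ 2) / M).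
  { eapply Rle_trans. apply RInt_abs_le with (g := fun _ => 2 / (sin (d / 2)) ^ 2 / M). lra. auto.
    apply ex_RInt_const.
    intros x Hx. unfold Rdiv. rewrite !Rabs_mult, (Rabs_pos_eq (/ M)) by (left; apply Rinv_0_lt_compat; auto).
    apply Rmult_le_compat_r. left; apply Rinv_0_lt_compat; auto.
    assert (Rabs (cos (M * x)) <= 1) by (apply Rabs_le; apply COS_bound).
    pose proof (gd_bound d x ltac:(lra) ltac:(lra)). pose proof (Rabs_pos (gd x)). pose proof (Rabs_pos (cos (M * x))).
    unfold Rdiv in H0. nra.
    rewrite RInt_const. change (scal (PI - d) (2 / sin (d / 2) ^ 2 / M)) with ((PI - d) * (2 / sin (d / 2) ^ 2 / M)).
    assert (0 < sin (d / 2)) by (apply sin_half_pos; lra).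
    assert (0 <= 2 / sin (d / 2) ^ 2 / M). { unfold Rdiv. apply Rmult_le_pos. apply Rmult_le_pos. lra.
      left; apply Rinv_0_lt_compat; nra. left; apply Rinv_0_lt_compat; auto. }
    unfold Rdiv in *. nra. }
  eapply Rle_trans. apply Rabs_triang.
  replace ((4 + 2 * PI / sin (d / 2) ^ 2) / M) with (4 / M + PI * (2 / sin (d / 2) ^ 2) / M).
  apply Rplus_le_compat; [exact B1|exact B2]. field. split. apply Rgt_not_eq. apply sin_half_pos; lra. lra.
Qed.

Lemma RL_lemma : forall eps, 0 < eps -> exists N0, forall N, (N0 <= N)%nat ->
  Rabs (RInt (fun x => (cos (s * x) - 1) * D N x) 0 PI) < eps.
Proof.
  intros eps He.
  pose proof PI_RGT_0 as HPI.
  set (d := Rmin (eps / 8) (PI / 2)).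
  assert (Hd : 0 < d < PI). { unfold d. split. apply Rmin_pos; lra. eapply Rle_lt_trans. apply Rmin_r. lra. }
  assert (Hd8 : d <= eps / 8) by apply Rmin_l.
  set (C := 4 + 2 * PI / (sin (d / 2)) ^ 2).
  assert (HC : 0 < C). { unfold C. assert (0 < sin (d / 2)) by (apply sin_half_pos; lra).
    assert (0 < 2 * PI / sin (d / 2) ^ 2) by (apply Rdiv_lt_0_compat; [lra| apply pow_lt; auto]). lra. }
  destruct (exists_nat_gt (2 * C / eps)) as [N0 HN0].
  exists N0. intros N HN.
  assert (HNN : INR N0 <= INR N) by (apply le_INR; auto).
  set (M := INR N + / 2).
  assert (HM : 0 < M) by (unfold M; pose proof (pos_INR N); lra).
  set (h := fun x => (cos (s * x) - 1) * D N x).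
  assert (Hhc : forall x, continuous h x).
  { intros x. unfold h. apply cmult. apply (ex_derive_continuous (fun x => cos (s * x) - 1)). auto_derive; auto. apply D_cont. }
  assert (Hex : forall a b, ex_RInt h a b). { intros; apply ex_RInt_cont; intros; auto. }
  fold h. rewrite <- (RInt_Chasles_R h 0 d PI) by auto.
  assert (B1 : Rabs (RInt h 0 d) <= 2 * d).
  { eapply Rle_trans. apply RInt_abs_le with (g := fun _ => 2). lra. auto. apply ex_RInt_const.
    intros x Hx. apply h_bound. lra.
    rewrite RInt_const. change (scal (d - 0) 2) with ((d - 0) * 2). lra. }
  assert (E2 : RInt h d PI = RInt (fun x => g x * sin (M * x)) d PI).
  { apply RInt_ext. intros x Hx. rewrite Rmin_left, Rmax_right in Hx by lra.
    unfold h, g, M. rewrite <- (D_sin N x). toR. field. apply Rgt_not_eq, sin_half_pos; lra. }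
  assert (B2 := IBP_bound d M Hd HM). fold C in B2.
  assert (C / M < eps / 2).
  { apply Rmult_lt_reg_r with M; auto. unfold Rdiv. rewrite Rmult_assoc, Rinv_l, Rmult_1_r by lra.
    unfold M. assert (2 * C / eps < INR N) by lra.
    apply Rmult_lt_compat_r with (r := eps) in H; auto. unfold Rdiv in H.
    rewrite Rmult_assoc, Rinv_l, Rmult_1_r in H by lra. nra. }
  eapply Rle_lt_trans. apply Rabs_triang. rewrite E2. lra.
Qed.

End RL.

Lemma U_lim s : 0 < s < 1 -> forall eps, 0 < eps -> exists N0, forall N, (N0 <= N)%nat ->
  Rabs (U s N - PI / sin (PI * s)) < eps.
Proof.
  intros Hs eps He.
  assert (Hsin : 0 < sin (PI * s)) by (apply sin_gt_0; pose proof PI_RGT_0; nra).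
  destruct (RL_lemma s Hs (eps * sin (PI * s) / 2)) as [N1 HN1].
  { apply Rdiv_lt_0_compat; nra. }
  destruct (exists_nat_gt (2 / (eps * sin (PI * s)))) as [N2 HN2].
  exists (S (Nat.max N1 N2)). intros N HN.
  destruct N as [|N]. lia.
  assert (HN1' := HN1 N ltac:(lia)).
  assert (HN2' : INR N2 <= INR N) by (apply le_INR; lia).
  rewrite U_V by auto.
  assert (Hc : forall x, continuous (fun x => cos (s * x) - 1) x).
  { intros x. apply (ex_derive_continuous (fun x => cos (s * x) - 1)). auto_derive; auto. }
  assert (HV : sin (PI * s) * V s N = RInt (fun x => (cos (s * x) - 1) * D N x) 0 PI + PI).
  { rewrite int_cosD_eq by auto.
    transitivity (RInt (fun x => (cos (s * x) - 1) * D N x) 0 PI + RInt (D N) 0 PI).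
    2:{ rewrite (is_RInt_unique _ _ _ _ (is_RInt_D N)). auto. }
    rewrite <- RInt_plus_R. apply RInt_ext. intros; toR; ring.
    apply ex_RInt_cont; intros; apply cmult; [apply Hc|apply D_cont].
    apply ex_RInt_cont; intros; apply D_cont. }
  set (r := RInt (fun x => (cos (s * x) - 1) * D N x) 0 PI) in *.
  pose proof (pos_INR N).
  assert (Hinv : / (INR N + 1 - s) < eps * sin (PI * s) / 2).
  { assert (0 < 2 / (eps * sin (PI * s))) by (apply Rdiv_lt_0_compat; nra).
    replace (eps * sin (PI * s) / 2) with (/ (2 / (eps * sin (PI * s)))) by (field; lra).
    apply Rinv_lt_contravar. nra. lra. }
  replace (V s N + (-1) ^ N / (INR N + 1 - s) - PI / sin (PI * s)) with
    ((sin (PI * s) * V s N - PI) / sin (PI * s) + (-1) ^ N / (INR N + 1 - s)) by (field; lra).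
  rewrite HV. unfold Rminus at 1. rewrite Rplus_assoc, Rplus_opp_r, Rplus_0_r.
  eapply Rle_lt_trans. apply Rabs_triang.
  unfold Rdiv. rewrite !Rabs_mult, pow_1_abs, Rmult_1_l.
  rewrite (Rabs_pos_eq (/ sin _)) by (left; apply Rinv_0_lt_compat; auto).
  rewrite (Rabs_pos_eq (/ (INR N + 1 - s))) by (left; apply Rinv_0_lt_compat; lra).
  assert (Rabs r * / sin (PI * s) < eps / 2).
  { apply Rmult_lt_reg_r with (sin (PI * s)); auto. rewrite Rmult_assoc, Rinv_l, Rmult_1_r by lra.
    unfold Rdiv in HN1'. lra. }
  assert (/ (INR N + 1 - s) < eps / 2).
  { eapply Rlt_le_trans. apply Hinv. pose proof (SIN_bound (PI * s)). unfold Rdiv. nra. }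
  lra.
Qed.

Lemma T_lim p : 1 < p -> forall eps, 0 < eps -> exists N0, forall N, (N0 <= N)%nat ->
  Rabs (T p N - / p * PI / sin (PI * / p)) < eps.
Proof.
  intros Hp eps He.
  set (s := / p).
  assert (Hs : 0 < s < 1). { unfold s. split. apply Rinv_0_lt_compat; lra.
    rewrite <- Rinv_1. apply Rinv_lt_contravar; lra. }
  destruct (U_lim s Hs (eps / s)) as [N0 HN0]. apply Rdiv_lt_0_compat; lra.
  exists N0. intros N HN.
  assert (E : T p N = s * U s N).
  { unfold T, U. rewrite <- (fsum_ext (fun n => s * ((-1) ^ n * (/ (INR n + s) + / (INR n + 1 - s))))).
    clear. induction N. simpl; ring. rewrite !fsum_S, IHN. ring.
    intros n _. pose proof (pos_INR n). unfold s.
    assert (E1: INR n + / p = (INR n * p + 1) * / p) by (field; lra).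
    assert (E2: INR n + 1 - / p = ((INR n + 1) * p - 1) * / p) by (field; lra).
    rewrite E1, E2, !Rinv_mult, !Rinv_inv. field. split. nra. nra. }
  rewrite E.
  assert (Hsin : 0 < sin (PI * s)) by (apply sin_gt_0; pose proof PI_RGT_0; nra).
  replace (s * U s N - s * PI / sin (PI * s)) with (s * (U s N - PI / sin (PI * s))) by (unfold s in *; field; split; lra).
  rewrite Rabs_mult, Rabs_pos_eq by lra.
  specialize (HN0 N HN). apply Rmult_lt_reg_l with (/ s). apply Rinv_0_lt_compat; lra.
  rewrite <- Rmult_assoc, Rinv_l, Rmult_1_l by lra. unfold Rdiv in HN0. lra.
Qed.

Lemma Rint_eq (f : R -> R) a b : ex_RInt f a b -> Rint f a b = RInt f a b.
Proof.
  intros H. unfold Rint.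
  assert (Hex : exists l, exists pr : Riemann_integrable f a b, RiemannInt pr = l).
  { exists (RInt f a b). exists (ex_RInt_Reals_0 _ _ _ H). symmetry; apply RInt_Reals. }
  destruct (epsilon_spec (inhabits 0) _ Hex) as [pr Hpr].
  rewrite <- Hpr. symmetry; apply RInt_Reals.
Qed.

Lemma Rint_inf_char (f F : R -> R) h :
  (forall T, h <= T -> Rint f h T = RInt F h T) ->
  (forall x, h <= x -> continuous F x) ->
  (forall x, h <= x -> 0 <= F x) ->
  (exists B, forall T, h <= T -> RInt F h T <= B) ->
  exists l, Rint_inf f h = l /\ (forall T, h <= T -> RInt F h T <= l) /\
            (forall B, (forall T, h <= T -> RInt F h T <= B) -> l <= B).
Proof.
  intros Hf Hc Hpos [B0 HB0].
  assert (Hex : forall a b, h <= a -> a <= b -> ex_RInt F a b).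
  { intros a b Ha Hb. apply ex_RInt_cont. intros x Hx. rewrite Rmin_left, Rmax_right in Hx by lra. apply Hc; lra. }
  assert (Hmono : forall a b, h <= a -> a <= b -> RInt F h a <= RInt F h b).
  { intros a b Ha Hb.
    assert (E1 : ex_RInt F h a) by (apply Hex; lra). assert (E2 : ex_RInt F a b) by (apply Hex; lra).
    rewrite <- (RInt_Chasles_R F h a b E1 E2).
    assert (0 <= RInt F a b). apply RInt_ge_0; auto. intros x Hx; apply Hpos; lra. lra. }
  set (S := fun y => exists T, h <= T /\ y = RInt F h T).
  destruct (completeness S) as [l [Hub Hlub]].
  { exists B0. intros y [T [HT ->]]. apply HB0; auto. }
  { exists (RInt F h h). exists h. split; [lra|auto]. }
  assert (Hle : forall T, h <= T -> RInt F h T <= l).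
  { intros T HT. apply Hub. exists T; auto. }
  assert (HP : forall eps, 0 < eps -> exists M, forall T, M < T -> Rabs (Rint f h T - l) < eps).
  { intros eps He.
    assert (exists T0, h <= T0 /\ l - eps < RInt F h T0).
    { apply Classical_Prop.NNPP. intros Hn.
      assert (l <= l - eps). apply Hlub. intros y [T [HT ->]].
      destruct (Rle_lt_dec (RInt F h T) (l - eps)); auto. exfalso; apply Hn; exists T; auto. lra. }
    destruct H as [T0 [HT0 HT0']]. exists T0. intros T HT.
    rewrite Hf by lra. pose proof (Hmono T0 T HT0 ltac:(lra)). pose proof (Hle T ltac:(lra)).
    apply Rabs_lt_between. lra. }
  exists l. split; [|split; auto].
  - unfold Rint_inf.
    assert (Hexl : exists l, forall eps, 0 < eps -> exists M, forall T, M < T -> Rabs (Rint f h T - l) < eps) by (exists l; auto).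
    pose proof (epsilon_spec (inhabits 0) _ Hexl) as HP'.
    set (l' := epsilon _ _) in *.
    destruct (Req_dec l' l) as [E|E]; auto. exfalso.
    assert (He : 0 < Rabs (l' - l) / 2) by (apply Rdiv_lt_0_compat; [apply Rabs_pos_lt; lra|lra]).
    destruct (HP' _ He) as [M1 HM1]. destruct (HP _ He) as [M2 HM2].
    set (T := Rmax M1 M2 + 1).
    assert (M1 < T) by (unfold T; pose proof (Rmax_l M1 M2); lra).
    assert (M2 < T) by (unfold T; pose proof (Rmax_r M1 M2); lra).
    specialize (HM1 T H). specialize (HM2 T H0).
    assert (Rabs (l' - l) <= Rabs (Rint f h T - l') + Rabs (Rint f h T - l)).
    { replace (l' - l) with (- (Rint f h T - l') + (Rint f h T - l)) by ring.
      eapply Rle_trans. apply Rabs_triang. rewrite Rabs_Ropp. lra. }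
    lra.
  - intros B HB. apply Hlub. intros y [T [HT ->]]. apply HB; auto.
Qed.

Lemma is_RInt_gauss c a b : 0 < c ->
  is_RInt (fun r => exp (- c * r ^ 2) * r) a b ((exp (- c * a ^ 2) - exp (- c * b ^ 2)) / (2 * c)).
Proof.
  intros Hc.
  replace ((exp (- c * a ^ 2) - exp (- c * b ^ 2)) / (2 * c)) with
    ((fun r => - exp (- c * r ^ 2) / (2 * c)) b - (fun r => - exp (- c * r ^ 2) / (2 * c)) a) by (simpl; field; lra).
  apply (is_RInt_derive_R (fun r => - exp (- c * r ^ 2) / (2 * c))).
  - intros x _. auto_derive. auto. toR. replace (x * (x * 1)) with (x ^ 2) by ring. field. lra.
  - intros x _. apply (ex_derive_continuous (fun r => exp (- c * r ^ 2) * r)). auto_derive. auto.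
Qed.

Lemma Rpower_pos x y : 0 < Rpower x y.
Proof. apply exp_pos. Qed.

Lemma Rpower_le_base a b e : 0 < a <= b -> 0 <= e -> Rpower a e <= Rpower b e.
Proof.
  intros [H1 H2] He. unfold Rpower. destruct H2 as [H2|H2]; [|subst; lra].
  destruct He as [He|He]; [|subst; rewrite !Rmult_0_l; lra].
  left. apply exp_increasing. apply Rmult_lt_compat_l; auto. apply ln_increasing; auto.
Qed.

Section Psi.
Variable alpha : R.
Hypothesis Ha : 2 < alpha.

Definition pp := alpha / (alpha - 2).
Definition ss := (alpha - 2) / alpha.

Lemma pp_gt1 : 1 < pp.
Proof. unfold pp. apply Rmult_lt_reg_r with (alpha - 2). lra. unfold Rdiv. rewrite Rmult_assoc, Rinv_l; lra. Qed.

Lemma ss_pp : ss * pp = 1.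
Proof. unfold ss, pp. field. lra. Qed.

Lemma hyp_eq z : 0 < z -> hyp2F1 alpha z = G pp (Rpower z ss) / Rpower z ss.
Proof.
  intros Hz. unfold hyp2F1. fold pp.
  set (c := Rpower z ss).
  assert (Hc : 0 < c) by apply Rpower_pos.
  assert (Hcp : Rpower c pp = z). { unfold c. rewrite Rpower_mult, ss_pp. apply Rpower_1; auto. }
  assert (Eq : forall sg, / (1 + z * rpow sg pp) = w pp (c * sg + 0)).
  { intros sg. unfold w. rewrite Rplus_0_r. f_equal. f_equal.
    destruct (Rlt_le_dec 0 sg).
    - rewrite !rpow_pos by nra. rewrite <- Rpower_mult_distr by auto. rewrite Hcp; auto.
    - rewrite !rpow_nonpos by nra. ring. }
  assert (Hex : ex_RInt (w pp) (c * 0 + 0) (c * 1 + 0)) by (apply w_ex; apply pp_gt1).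
  rewrite Rint_eq.
  - rewrite (RInt_ext _ (fun sg => / c * scal c (w pp (c * sg + 0)))).
    2:{ intros x _. rewrite Eq. unfold scal; simpl; unfold mult; simpl. field. lra. }
    rewrite RInt_scal_R.
    replace (RInt (fun x : R => scal c (w pp (c * x + 0))) 0 1) with (RInt (w pp) (c * 0 + 0) (c * 1 + 0)).
    2:{ symmetry. exact (RInt_comp_lin (w pp) c 0 0 1 Hex). }
    unfold G. rewrite Rmult_0_r, Rmult_1_r, !Rplus_0_r. unfold Rdiv; ring.
    apply (ex_RInt_comp_lin (w pp)); auto.
  - apply (ex_RInt_ext (fun sg => w pp (c * sg + 0))). intros; rewrite Eq; auto.
    apply ex_RInt_cont. intros x _. apply (continuous_comp (fun sg => c * sg + 0) (w pp)).
    apply (ex_derive_continuous (fun sg => c * sg + 0)). auto_derive; auto.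
    apply w_cont. apply pp_gt1.
Qed.

Lemma psi_eq z : 0 < z -> psi alpha z = 2 / (alpha - 2) * Rpower z (2 / alpha) * G pp (Rpower z ss).
Proof.
  intros Hz. unfold psi. rewrite hyp_eq by auto.
  assert (z = Rpower z (2 / alpha) * Rpower z ss).
  { rewrite <- Rpower_plus. unfold ss. replace (2 / alpha + (alpha - 2) / alpha) with 1 by (field; lra).
    rewrite Rpower_1; auto. }
  rewrite H at 1. field. pose proof (Rpower_pos z ss). split; lra.
Qed.

End Psi.

Section Main.
Variables h alpha theta : R.
Hypothesis hh : 0 < h.
Hypothesis halpha : 2 < alpha.
Hypothesis htheta : 0 < theta.

Let p := pp alpha.
Let s := ss alpha.
Let Hp : 1 < p := pp_gt1 alpha halpha.
Definition Ginf := / p * PI / sin (PI * / p).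
Definition Kc := 2 / (alpha - 2) * Rpower theta (2 / alpha).
Definition zf r := theta * Rpower h (- alpha) * Rpower r alpha.
Definition Q r := Kc * G p (Rpower (zf r) s).
Definition Qinf := Kc * Ginf.
Definition Fl lam r := exp (- (PI * lam * Q r) * r ^ 2) * r.

Lemma Kc_pos : 0 < Kc.
Proof. unfold Kc. apply Rmult_lt_0_compat. apply Rdiv_lt_0_compat; lra. apply Rpower_pos. Qed.

Lemma zf_pos r : 0 < zf r.
Proof. unfold zf. apply Rmult_lt_0_compat. apply Rmult_lt_0_compat; auto; apply Rpower_pos. apply Rpower_pos. Qed.

Lemma G_lim_inf : forall eps, 0 < eps -> exists X0, 1 <= X0 /\ forall X, X0 <= X -> Rabs (G p X - Ginf) < eps.
Proof. apply G_limit; auto. apply T_lim; auto. Qed.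

Lemma G_le_Ginf X : G p X <= Ginf.
Proof. apply G_le_limit; auto. apply G_lim_inf. Qed.

Lemma s_pos : 0 < s.
Proof. unfold s, ss. apply Rdiv_lt_0_compat; lra. Qed.

Lemma Q_mono r1 r2 : 0 < r1 <= r2 -> Q r1 <= Q r2.
Proof.
  intros Hr. unfold Q. apply Rmult_le_compat_l. left; apply Kc_pos.
  apply G_mono; auto. apply Rpower_le_base. split. apply zf_pos.
  unfold zf. apply Rmult_le_compat_l. left; apply Rmult_lt_0_compat; auto; apply Rpower_pos.
  apply Rpower_le_base; lra. left; apply s_pos.
Qed.

Lemma Q_pos r : 0 < r -> 0 < Q r.
Proof. intros. unfold Q. apply Rmult_lt_0_compat. apply Kc_pos. apply G_pos; auto. apply Rpower_pos. Qed.

Lemma Q_le r : Q r <= Qinf.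
Proof. unfold Q, Qinf. apply Rmult_le_compat_l. left; apply Kc_pos. apply G_le_Ginf. Qed.

Lemma Q_lim : forall eps, 0 < eps -> exists R0, h <= R0 /\ forall r, R0 <= r -> Qinf - eps <= Q r.
Proof.
  intros eps He.
  destruct (G_lim_inf (eps / Kc)) as [X0 [HX0 HX]]. apply Rdiv_lt_0_compat; auto. apply Kc_pos.
  set (Y := Rpower (Rpower X0 p * Rpower h alpha / theta) (/ alpha)).
  exists (Rmax h Y). split. apply Rmax_l. intros r Hr.
  assert (Hr0 : 0 < r) by (pose proof (Rmax_l h Y); lra).
  assert (HY : Y <= r) by (pose proof (Rmax_r h Y); lra).
  assert (Hz : Rpower X0 p <= zf r).
  { assert (Rpower Y alpha <= Rpower r alpha).
    { apply Rpower_le_base. split. apply Rpower_pos. auto. lra. }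
    unfold Y in H. rewrite Rpower_mult in H. replace (/ alpha * alpha) with 1 in H by (field; lra).
    rewrite Rpower_1 in H. 2:{ unfold Rdiv. apply Rmult_lt_0_compat. apply Rmult_lt_0_compat; apply Rpower_pos.
      apply Rinv_0_lt_compat; auto. }
    unfold zf. apply Rmult_le_reg_l with (Rpower h alpha / theta).
    apply Rdiv_lt_0_compat; auto; apply Rpower_pos.
    replace (Rpower h alpha / theta * (theta * Rpower h (- alpha) * Rpower r alpha)) with (Rpower r alpha).
    2:{ rewrite Rpower_Ropp. field. split. apply Rgt_not_eq, Rpower_pos. lra. }
    unfold Rdiv in *. nra. }
  assert (HX1 : X0 <= Rpower (zf r) s).
  { assert (E : Rpower (Rpower X0 p) s = X0).
    { rewrite Rpower_mult. unfold p, s. rewrite Rmult_comm, ss_pp by lra. apply Rpower_1; lra. }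
    rewrite <- E at 1. apply Rpower_le_base. split. apply Rpower_pos. exact Hz.
    left; apply s_pos. }
  specialize (HX _ HX1). apply Rabs_lt_between in HX.
  unfold Q, Qinf. pose proof Kc_pos.
  assert (Kc * (eps / Kc) = eps) by (field; lra). nra.
Qed.

Lemma Qinf_val : / Qinf = alpha * sin (2 * PI / alpha) / (2 * PI * Rpower theta (2 / alpha)).
Proof.
  unfold Qinf, Kc, Ginf. fold p.
  assert (E1 : / p = (alpha - 2) / alpha) by (unfold p, pp; field; lra).
  assert (E2 : sin (PI * / p) = sin (2 * PI / alpha)).
  { rewrite E1. rewrite <- sin_PI_x. f_equal. field. lra. }
  rewrite E2, E1.
  assert (0 < sin (2 * PI / alpha)).
  { apply sin_gt_0. pose proof PI_RGT_0. apply Rdiv_lt_0_compat; lra.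
    apply Rmult_lt_reg_r with alpha. lra. unfold Rdiv. rewrite Rmult_assoc, Rinv_l by lra. pose proof PI_RGT_0. nra. }
  pose proof (Rpower_pos theta (2 / alpha)). pose proof PI_RGT_0.
  field. repeat split; lra.
Qed.

Lemma Qinf_pos : 0 < Qinf.
Proof. pose proof (Q_pos h hh). pose proof (Q_le h). lra. Qed.

Lemma integrand_eq lam r : 0 < r ->
  exp (- PI * lam * h ^ 2 * psi alpha (theta * rpow h (- alpha) * rpow r alpha)) * r = Fl lam r.
Proof.
  intros Hr. unfold Fl. f_equal. f_equal.
  rewrite !rpow_pos by auto. fold (zf r).
  rewrite (psi_eq alpha halpha) by apply zf_pos. fold p s.
  unfold Q, Kc.
  assert (Rpower (zf r) (2 / alpha) = Rpower theta (2 / alpha) * / h ^ 2 * r ^ 2).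
  { unfold zf. rewrite <- !Rpower_mult_distr; try apply Rpower_pos; try apply Rmult_lt_0_compat; auto; try apply Rpower_pos.
    rewrite !Rpower_mult. replace (- alpha * (2 / alpha)) with (- INR 2) by (simpl; field; lra).
    replace (alpha * (2 / alpha)) with (INR 2) by (simpl; field; lra).
    rewrite Rpower_Ropp, !Rpower_pow by auto. auto. }
  rewrite H. field. lra.
Qed.

Lemma Fl_cont lam r : 0 < r -> continuous (Fl lam) r.
Proof.
  intros Hr. unfold Fl, Q.
  assert (Hc : continuous (fun r => Rpower (zf r) s) r).
  { apply (ex_derive_continuous (fun r => Rpower (zf r) s)).
    unfold zf, Rpower. auto_derive. repeat split; auto.
    pose proof (exp_pos (- alpha * ln h)). pose proof (exp_pos (alpha * ln r)).
    apply Rmult_lt_0_compat; auto. apply Rmult_lt_0_compat; auto. }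
  assert (HG : continuous (fun r => G p (Rpower (zf r) s)) r).
  { apply (continuous_comp (fun r => Rpower (zf r) s) (G p)); auto. apply G_cont; auto. }
  apply cmult; [|apply cid].
  apply (continuous_comp (fun r => - (PI * lam * (Kc * G p (Rpower (zf r) s))) * r ^ 2) exp).
  apply cmult. apply (continuous_opp (fun r => PI * lam * (Kc * G p (Rpower (zf r) s)))).
  apply cmult. apply cconst. apply cmult. apply cconst. auto. apply cpow, cid.
  apply (ex_derive_continuous exp). auto_derive; auto.
Qed.

Lemma Fl_pos lam r : 0 < r -> 0 <= Fl lam r.
Proof. intros. unfold Fl. left; apply Rmult_lt_0_compat; auto; apply exp_pos. Qed.

Lemma Fl_upper lam A c : 0 < c -> 0 <= A ->
  (forall r, h <= r -> Fl lam r <= A * (exp (- c * r ^ 2) * r)) ->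
  forall T, h <= T -> RInt (Fl lam) h T <= A * exp (- c * h ^ 2) / (2 * c).
Proof.
  intros Hc HA H T HT.
  apply Rle_trans with (RInt (fun r => A * (exp (- c * r ^ 2) * r)) h T).
  - apply RInt_le; auto. apply ex_RInt_cont. intros x Hx. rewrite Rmin_left, Rmax_right in Hx by lra.
    apply Fl_cont; lra.
    eexists. apply (is_RInt_scal_R (fun r => exp (- c * r ^ 2) * r)). apply is_RInt_gauss; auto.
    intros x Hx; apply H; lra.
  - rewrite RInt_scal_R. rewrite (is_RInt_unique _ _ _ _ (is_RInt_gauss c h T Hc)).
    pose proof (exp_pos (- c * T ^ 2)). unfold Rdiv.
    rewrite Rmult_assoc. apply Rmult_le_compat_l; auto.
    apply Rmult_le_compat_r. left; apply Rinv_0_lt_compat; lra. lra.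
    eexists; apply is_RInt_gauss; auto.
Qed.

Lemma PS_char lam : 0 < lam ->
  exists l, Pcov_S alpha h theta lam = 2 * PI * lam * l /\
    (forall T, h <= T -> RInt (Fl lam) h T <= l) /\
    (forall B, (forall T, h <= T -> RInt (Fl lam) h T <= B) -> l <= B).
Proof.
  intros Hl.
  destruct (Rint_inf_char (fun r => exp (- PI * lam * h ^ 2 * psi alpha (theta * rpow h (- alpha) * rpow r alpha)) * r)
              (Fl lam) h) as [l [H1 [H2 H3]]].
  - intros T HT. rewrite Rint_eq. apply RInt_ext. intros x Hx. rewrite Rmin_left, Rmax_right in Hx by lra.
    apply integrand_eq; lra.
    apply (ex_RInt_ext (Fl lam)). intros x Hx. rewrite Rmin_left, Rmax_right in Hx by lra.
    symmetry; apply integrand_eq; lra.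
    apply ex_RInt_cont. intros x Hx. rewrite Rmin_left, Rmax_right in Hx by lra. apply Fl_cont; lra.
  - intros; apply Fl_cont; lra.
  - intros; apply Fl_pos; lra.
  - exists (1 * exp (- (PI * lam * Q h) * h ^ 2) / (2 * (PI * lam * Q h))).
    apply Fl_upper. pose proof PI_RGT_0. pose proof (Q_pos h hh). apply Rmult_lt_0_compat; nra. lra.
    intros r Hr. unfold Fl. rewrite Rmult_1_l. apply Rmult_le_compat_r. lra.
    destruct (Q_mono h r ltac:(lra)) as [E|E].
    left; apply exp_increasing. pose proof PI_RGT_0. apply Rmult_lt_compat_r. nra.
    apply Ropp_lt_contravar. apply Rmult_lt_compat_l. nra. auto.
    rewrite E; lra.
  - exists l. split; auto. unfold Pcov_S. rewrite H1. auto.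
Qed.

End Main.

Ltac posR := repeat (match goal with |- 0 < _ * _ => apply Rmult_lt_0_compat end); try lra; try assumption.

Lemma lt_div k lam e : 0 < k -> lam < e / k -> lam * k < e.
Proof. intros Hk H. apply Rmult_lt_compat_r with (r := k) in H; auto.
  replace (e / k * k) with e in H by (field; lra). auto. Qed.
Lemma lt_inv k lam : 0 < k -> lam < / k -> lam * k < 1.
Proof. intros Hk H. apply Rmult_lt_compat_r with (r := k) in H; auto.
  rewrite Rinv_l in H by lra. auto. Qed.
Lemma gt_inv k lam : 0 < k -> / k < lam -> 1 < lam * k.
Proof. intros Hk H. apply Rmult_lt_compat_r with (r := k) in H; auto.
  rewrite Rinv_l in H by lra. auto. Qed.

Lemma exp_le_mono x y : x <= y -> exp x <= exp y.
Proof. intros [H|H]. left; apply exp_increasing; auto. subst; lra. Qed.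

Lemma exp_small x : 0 <= x <= 1 / 2 -> exp x <= 1 + 2 * x.
Proof.
  intros Hx. pose proof (exp_ineq1_le (- x)).
  assert (exp x * exp (- x) = 1) by (rewrite <- exp_plus; replace (x + - x) with 0 by ring; apply exp_0).
  pose proof (exp_pos x). nra.
Qed.

Lemma exp_neg_le x : 0 < x -> exp (- x) < / x.
Proof.
  intros Hx. pose proof (exp_ineq1_le x).
  assert (exp x * exp (- x) = 1) by (rewrite <- exp_plus; replace (x + - x) with 0 by ring; apply exp_0).
  pose proof (exp_pos (- x)).
  apply Rmult_lt_reg_l with x; auto. rewrite Rinv_r by lra. nra.
Qed.

Lemma gauss_lower (F : R -> R) h l c : 0 < h -> 0 < c ->
  (forall T, h <= T -> RInt F h T <= l) ->
  (forall x, h <= x -> continuous F x) ->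
  (forall r, h <= r -> exp (- c * r ^ 2) * r <= F r) ->
  exp (- c * h ^ 2) / (2 * c) <= l.
Proof.
  intros Hh Hc Hl HF Hlow.
  destruct (Rle_lt_dec (exp (- c * h ^ 2) / (2 * c)) l) as [H|H]; auto. exfalso.
  set (eta := (exp (- c * h ^ 2) / (2 * c) - l) / 2).
  assert (Heta : 0 < eta) by (unfold eta; lra).
  set (T := Rmax h (/ (2 * c * c * eta)) + 1).
  assert (HT1 : 1 <= T). { unfold T. pose proof (Rmax_l h (/ (2 * c * c * eta))). pose proof (Rmax_r h (/ (2 * c * c * eta))).
    assert (0 < / (2 * c * c * eta)). apply Rinv_0_lt_compat. posR; lra. lra. }
  assert (HTh : h <= T) by (unfold T; pose proof (Rmax_l h (/ (2 * c * c * eta))); lra).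
  assert (HT2 : / (2 * c * c * eta) < T) by (unfold T; pose proof (Rmax_r h (/ (2 * c * c * eta))); lra).
  assert (Hlow' : (exp (- c * h ^ 2) - exp (- c * T ^ 2)) / (2 * c) <= RInt F h T).
  { rewrite <- (is_RInt_unique _ _ _ _ (is_RInt_gauss c h T Hc)).
    apply RInt_le; auto. eexists; apply is_RInt_gauss; auto.
    apply ex_RInt_cont. intros x Hx. rewrite Rmin_left, Rmax_right in Hx by lra. apply HF; lra.
    intros x Hx. apply Hlow; lra. }
  specialize (Hl T HTh).
  assert (Hsmall : exp (- c * T ^ 2) / (2 * c) < eta).
  { assert (0 < c * T ^ 2) by (apply Rmult_lt_0_compat; [lra| apply pow_lt; lra]).
    pose proof (exp_neg_le (c * T ^ 2) H0). replace (- c * T ^ 2) with (- (c * T ^ 2)) by ring.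
    apply Rle_lt_trans with (/ (c * T ^ 2) / (2 * c)).
    unfold Rdiv. apply Rmult_le_compat_r. left; apply Rinv_0_lt_compat; lra. lra.
    assert (T <= T ^ 2) by (simpl; nra).
    assert (/ (2 * c * c * eta) < T ^ 2) by lra.
    assert (0 < 2 * c * c * eta) by (posR; lra).
    apply Rinv_lt_contravar in H3. rewrite Rinv_inv in H3.
    2:{ apply Rmult_lt_0_compat. apply Rinv_0_lt_compat; auto. apply pow_lt; lra. }
    replace (/ (c * T ^ 2) / (2 * c)) with (/ T ^ 2 / (2 * c * c)) by (field; split; lra).
    apply Rmult_lt_reg_r with (2 * c * c). nra. unfold Rdiv. rewrite Rmult_assoc, Rinv_l, Rmult_1_r by nra. nra. }
  unfold eta in *. unfold Rdiv in *. lra.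
Qed.

Theorem lemma3 (h alpha theta : R) (hh : 0 < h) (halpha : 2 < alpha)
  (htheta : 0 < theta) :
  (* (i) *)
  (forall eps, 0 < eps -> exists delta, 0 < delta /\
     forall lambda, 0 < lambda < delta ->
       Rabs (Pcov_C alpha h theta lambda - / (psi alpha theta + 1)) < eps) /\
  (* (ii) *)
  (1 <= theta ->
   forall eps, 0 < eps -> exists delta, 0 < delta /\
     forall lambda, 0 < lambda < delta ->
       Rabs (Pcov_S alpha h theta lambda -
             alpha * sin (2 * PI / alpha) / (2 * PI * Rpower theta (2 / alpha))) < eps) /\
  (* (iii) *)
  (forall eps, 0 < eps -> exists M, forall lambda, M < lambda ->
       Rabs (Pcov_C alpha h theta lambda) < eps) /\
  (1 <= theta ->
   forall eps, 0 < eps -> exists M, forall lambda, M < lambda ->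
       Rabs (Pcov_S alpha h theta lambda) < eps).
Proof.
  assert (HPI : 0 < PI) by apply PI_RGT_0.
  assert (Hpsi : 0 < psi alpha theta).
  { rewrite (psi_eq alpha halpha) by auto. apply Rmult_lt_0_compat. apply Rmult_lt_0_compat.
    apply Rdiv_lt_0_compat; lra. apply Rpower_pos. apply G_pos. apply pp_gt1; auto. apply Rpower_pos. }
  set (ps := psi alpha theta) in *.
  assert (HC : forall lam, Pcov_C alpha h theta lam = / (ps + 1) * exp (- (PI * lam * h ^ 2 * ps))).
  { intros lam. unfold Pcov_C. fold ps. do 2 f_equal. ring. }
  assert (Hinv : 0 < / (ps + 1) < 1).
  { split. apply Rinv_0_lt_compat; lra. rewrite <- Rinv_1. apply Rinv_lt_contravar; lra. }
  assert (Hh2 : 0 < h ^ 2) by (apply pow_lt; auto).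
  split; [|split; [|split]].
  -
    intros eps He. exists (eps / (PI * h ^ 2 * ps)). split.
    apply Rdiv_lt_0_compat; auto. posR; auto.
    intros lam [Hl1 Hl2]. rewrite HC.
    set (x := PI * lam * h ^ 2 * ps).
    assert (Hx : 0 < x) by (unfold x; posR; auto).
    assert (Hxe : x < eps).
    { unfold x. pose proof (lt_div (PI * h ^ 2 * ps) lam eps ltac:(posR) Hl2). nra. }
    pose proof (exp_ineq1_le (- x)). assert (exp (- x) <= 1) by (rewrite <- exp_0; apply exp_le_mono; lra).
    replace (/ (ps + 1) * exp (- x) - / (ps + 1)) with (/ (ps + 1) * (exp (- x) - 1)) by ring.
    rewrite Rabs_mult, Rabs_pos_eq by lra. rewrite Rabs_left1 by lra. nra.
  -
    intros _ eps He.
    set (L := alpha * sin (2 * PI / alpha) / (2 * PI * Rpower theta (2 / alpha))).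
    assert (HL : L = / Qinf alpha theta) by (unfold L; rewrite Qinf_val; auto).
    pose proof (Qinf_pos h alpha theta hh halpha) as HQ.
    set (Qi := Qinf alpha theta) in *.
    set (e' := Rmin (Qi / 2) (eps * Qi ^ 2 / 8)).
    assert (He' : 0 < e') by (unfold e'; apply Rmin_pos; [lra| apply Rdiv_lt_0_compat; [apply Rmult_lt_0_compat; [lra|apply pow_lt; lra]|lra]]).
    assert (He'1 : e' <= Qi / 2) by apply Rmin_l.
    assert (He'2 : e' <= eps * Qi ^ 2 / 8) by apply Rmin_r.
    destruct (Q_lim h alpha theta hh halpha htheta e' He') as [R0 [HR0 HR0']].
    set (A := / (Qi - e')).
    assert (HA : 0 < A) by (unfold A; apply Rinv_0_lt_compat; lra).
    assert (HAL : A - L <= eps / 4).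
    { rewrite HL. unfold A. replace (/ (Qi - e') - / Qi) with (e' / (Qi * (Qi - e'))) by (field; lra).
      apply Rle_trans with (e' / (Qi * (Qi / 2))).
      unfold Rdiv. apply Rmult_le_compat_l. lra. apply Rinv_le_contravar. nra. nra.
      replace (e' / (Qi * (Qi / 2))) with (2 * e' / Qi ^ 2) by (field; lra).
      apply Rmult_le_reg_r with (Qi ^ 2). apply pow_lt; lra. unfold Rdiv. rewrite Rmult_assoc, Rinv_l, Rmult_1_r.
      unfold Rdiv in He'2. nra. apply Rgt_not_eq, pow_lt; lra. }
    assert (HR0p : 0 < R0) by lra.
    assert (HR2 : 0 < R0 ^ 2) by (apply pow_lt; lra).
    set (d1 := eps / (PI * h ^ 2)).
    set (d2 := eps / (4 * PI * R0 ^ 2)).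
    set (d3 := / (2 * PI * R0 ^ 2 * Qi)).
    assert (Hd1 : 0 < d1) by (unfold d1; apply Rdiv_lt_0_compat; nra).
    assert (Hd2 : 0 < d2) by (unfold d2; apply Rdiv_lt_0_compat; nra).
    assert (Hd3 : 0 < d3) by (unfold d3; apply Rinv_0_lt_compat; posR; lra).
    exists (Rmin d1 (Rmin d2 d3)). split. apply Rmin_pos; auto. apply Rmin_pos; auto.
    intros lam [Hl1 Hl2].
    assert (Hl_1 : lam < d1) by (eapply Rlt_le_trans; [apply Hl2|apply Rmin_l]).
    assert (Hl_2 : lam < d2) by (eapply Rlt_le_trans; [apply Hl2|]; eapply Rle_trans; [apply Rmin_r|apply Rmin_l]).
    assert (Hl_3 : lam < d3) by (eapply Rlt_le_trans; [apply Hl2|]; eapply Rle_trans; [apply Rmin_r|apply Rmin_r]).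
    destruct (PS_char h alpha theta hh halpha htheta lam Hl1) as [l [HPS [Hl Hlub]]].
    rewrite HPS.
    set (c1 := PI * lam * Qi).
    assert (Hc1 : 0 < c1) by (unfold c1; posR; lra).
    assert (Hlow : exp (- c1 * h ^ 2) / (2 * c1) <= l).
    { apply (gauss_lower (Fl h alpha theta lam)); auto.
      intros; apply Fl_cont; auto; lra.
      intros r Hr. unfold Fl. apply Rmult_le_compat_r. lra. apply exp_le_mono.
      pose proof (Q_le h alpha theta halpha r). unfold c1. fold Qi in H.
      assert (0 <= r ^ 2) by (apply pow_le; lra).
      assert (PI * lam * Q h alpha theta r <= PI * lam * Qi).
      { apply Rmult_le_compat_l; auto. apply Rmult_le_pos; lra. }
      nra. }
    assert (HlowP : L - PI * lam * h ^ 2 <= 2 * PI * lam * l).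
    { apply Rle_trans with (2 * PI * lam * (exp (- c1 * h ^ 2) / (2 * c1))).
      2:{ apply Rmult_le_compat_l; auto. nra. }
      replace (2 * PI * lam * (exp (- c1 * h ^ 2) / (2 * c1))) with (exp (- c1 * h ^ 2) * L).
      2:{ rewrite HL. unfold c1. field. repeat split; lra. }
      pose proof (exp_ineq1_le (- c1 * h ^ 2)).
      assert (0 < L) by (rewrite HL; apply Rinv_0_lt_compat; auto).
      assert (c1 * h ^ 2 * L = PI * lam * h ^ 2).
      { rewrite HL. unfold c1. field. lra. }
      nra. }
    set (c2 := PI * lam * (Qi - e')).
    assert (Hc2 : 0 < c2) by (unfold c2; posR; lra).
    assert (Hup : l <= exp (c2 * R0 ^ 2) * exp (- c2 * h ^ 2) / (2 * c2)).
    { apply Hlub. apply Fl_upper; auto. left; apply exp_pos.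
      intros r Hr. unfold Fl. rewrite <- Rmult_assoc. apply Rmult_le_compat_r. lra.
      rewrite <- exp_plus. apply exp_le_mono.
      assert (Hq : 0 < Q h alpha theta r) by (apply Q_pos; auto; lra).
      assert (0 <= r ^ 2) by (apply pow_le; lra).
      destruct (Rle_lt_dec R0 r) as [HrR|HrR].
      - specialize (HR0' r HrR). fold Qi in HR0'.
        assert (PI * lam * (Qi - e') <= PI * lam * Q h alpha theta r).
        { apply Rmult_le_compat_l; auto. apply Rmult_le_pos; lra. }
        assert (0 <= PI * lam * (Qi - e') * R0 ^ 2) by (unfold c2 in Hc2; apply Rmult_le_pos; lra). assert (PI * lam * (Qi - e') * r ^ 2 <= PI * lam * Q h alpha theta r * r ^ 2) by (apply Rmult_le_compat_r; auto). unfold c2. lra.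
      - assert (r ^ 2 <= R0 ^ 2) by (apply pow_incr; lra).
        assert (0 <= PI * lam * Q h alpha theta r) by (apply Rmult_le_pos; [apply Rmult_le_pos|]; lra).
        assert (0 <= PI * lam * Q h alpha theta r * r ^ 2) by (apply Rmult_le_pos; lra).
        assert (0 <= c2 * (R0 ^ 2 - r ^ 2)) by (apply Rmult_le_pos; lra).
        lra. }
    assert (HupP : 2 * PI * lam * l <= A + 2 * PI * lam * R0 ^ 2).
    { set (x := c2 * R0 ^ 2).
      assert (Hx : 0 <= x <= 1 / 2).
      { unfold x. split. apply Rmult_le_pos; lra. unfold c2.
        assert (lam * (2 * PI * R0 ^ 2 * Qi) < 1).
        { unfold d3 in Hl_3. apply lt_inv; auto. posR. }
        assert (PI * lam * (Qi - e') * R0 ^ 2 <= PI * lam * Qi * R0 ^ 2).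
        { apply Rmult_le_compat_r. lra. apply Rmult_le_compat_l. apply Rmult_le_pos; lra. lra. }
        lra. }
      pose proof (exp_small x Hx).
      assert (exp (- c2 * h ^ 2) <= 1).
      { rewrite <- exp_0; apply exp_le_mono. assert (0 <= c2 * h ^ 2) by (apply Rmult_le_pos; lra). lra. }
      apply Rle_trans with (2 * PI * lam * (exp x * exp (- c2 * h ^ 2) / (2 * c2))).
      apply Rmult_le_compat_l; auto. nra.
      replace (2 * PI * lam * (exp x * exp (- c2 * h ^ 2) / (2 * c2))) with (A * (exp x * exp (- c2 * h ^ 2))).
      2:{ unfold A, c2. field. repeat split; lra. }
      assert (A * x = PI * lam * R0 ^ 2) by (unfold A, x, c2; field; lra).
      assert (0 < exp (- c2 * h ^ 2)) by apply exp_pos.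
      assert (exp x * exp (- c2 * h ^ 2) <= 1 + 2 * x) by nra.
      nra. }
    assert (2 * PI * lam * R0 ^ 2 < eps / 2).
    { unfold d2 in Hl_2. pose proof (lt_div (4 * PI * R0 ^ 2) lam eps ltac:(posR) Hl_2). nra. }
    assert (PI * lam * h ^ 2 < eps).
    { unfold d1 in Hl_1. pose proof (lt_div (PI * h ^ 2) lam eps ltac:(posR) Hl_1). nra. }
    apply Rabs_lt_between. split; lra.
  -
    intros eps He. exists (/ (eps * PI * h ^ 2 * ps)).
    intros lam Hl.
    assert (Hk : 0 < eps * PI * h ^ 2 * ps) by (posR; auto).
    assert (Hl0 : 0 < lam) by (pose proof (Rinv_0_lt_compat _ Hk); lra).
    rewrite HC. set (x := PI * lam * h ^ 2 * ps).
    assert (Hx : 0 < x) by (unfold x; posR; auto).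
    pose proof (exp_neg_le x Hx). pose proof (exp_pos (- x)).
    rewrite Rabs_pos_eq by nra.
    assert (/ x < eps).
    { pose proof (gt_inv _ _ Hk Hl).
      apply Rmult_lt_reg_r with x; auto. rewrite Rinv_l by lra. unfold x. nra. }
    nra.
  -
    intros _ eps He.
    set (Qh := Q h alpha theta h).
    assert (HQh : 0 < Qh) by (apply Q_pos; auto).
    exists (/ (eps * PI * Qh ^ 2 * h ^ 2)).
    intros lam Hl.
    assert (Hk : 0 < eps * PI * Qh ^ 2 * h ^ 2) by (posR; auto; apply pow_lt; auto).
    assert (Hl0 : 0 < lam) by (pose proof (Rinv_0_lt_compat _ Hk); lra).
    destruct (PS_char h alpha theta hh halpha htheta lam Hl0) as [l [HPS [Hl1 Hlub]]].
    rewrite HPS.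
    set (c := PI * lam * Qh).
    assert (Hc : 0 < c) by (unfold c; posR; auto).
    assert (Hl0' : 0 <= l). { pose proof (Hl1 h ltac:(lra)). rewrite RInt_point in H. auto. }
    assert (Hup : l <= 1 * exp (- c * h ^ 2) / (2 * c)).
    { apply Hlub. apply Fl_upper; auto. lra.
      intros r Hr. unfold Fl. rewrite Rmult_1_l. apply Rmult_le_compat_r. lra. apply exp_le_mono.
      pose proof (Q_mono h alpha theta halpha htheta h r ltac:(lra)). fold Qh in H.
      assert (0 <= r ^ 2) by (apply pow_le; lra).
      unfold c. assert (PI * lam * Qh <= PI * lam * Q h alpha theta r) by (apply Rmult_le_compat_l; nra). nra. }
    assert (Hch : 0 < c * h ^ 2) by (apply Rmult_lt_0_compat; auto).
    pose proof (exp_neg_le _ Hch).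
    replace (- c * h ^ 2) with (- (c * h ^ 2)) in Hup by ring.
    assert (H2P : 0 <= 2 * PI * lam) by (apply Rmult_le_pos; lra).
    rewrite Rabs_pos_eq by (apply Rmult_le_pos; lra).
    assert (2 * PI * lam * l <= / (c * h ^ 2) * / Qh).
    { apply Rle_trans with (2 * PI * lam * (1 * exp (- (c * h ^ 2)) / (2 * c))).
      apply Rmult_le_compat_l; auto.
      replace (2 * PI * lam * (1 * exp (- (c * h ^ 2)) / (2 * c))) with (exp (- (c * h ^ 2)) * / Qh).
      2:{ unfold c. field. repeat split; lra. }
      apply Rmult_le_compat_r. left; apply Rinv_0_lt_compat; auto. lra. }
    assert (/ (c * h ^ 2) * / Qh < eps).
    { rewrite <- Rinv_mult. assert (Hp3 : 0 < c * h ^ 2 * Qh) by posR.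
      apply Rmult_lt_reg_r with (c * h ^ 2 * Qh). auto.
      rewrite Rinv_l by lra.
      pose proof (gt_inv _ _ Hk Hl). unfold c.
      replace (eps * (PI * lam * Qh * h ^ 2 * Qh)) with (lam * (eps * PI * Qh ^ 2 * h ^ 2)) by ring. lra. }
    lra.
Qed.
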